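(* For every $t\ge1$, $$\mathbb E_0\big[\phi_t(\overline{\mathcal X})\big]\ge\mathbb E\big[\phi_t(\overline{\mathcal Z})\big],$$ where $\overline{\mathcal X}=(\overline{\mathcal X}(s^t))_{s^t\in\mathcal S^t}$ and $\overline{\mathcal Z}=(\overline{\mathcal Z}(s^t))_{s^t\in\mathcal S^t}$.
   Context: $V=\{1,\dots,N\}$; $P$ row-stochastic irreducible aperiodic with stationary distribution $\pi>0$; $\beta\in\mathbb R^N$. $P(s^t)=\pi_{s_1}\prod_{k<t}P_{s_ks_{k+1}}$, $\mathcal S^t=\{s^t\in V^t:P(s^t)>0\}$, $C_t=|\mathcal S^t|$, $\beta(s^t)^2=\sum_{k=1}^t\beta_{s_k}^2$. For $x=(x_{s^t})_{s^t\in\mathcal S^t}\in\mathbb R^{C_t}$, $$\phi_t(x)=-\frac1t\log\Big(\sum_{s^t\in\mathcal S^t}P(s^t)e^{-\beta(s^t)^2/2+x_{s^t}}\Big).$$ Under $\mathbb P_0$ the $X_{i,k}$ ($i\in V$, $k\ge1$) are i.i.d. $\mathcal N(0,1)$, and $\overline{\mathcal X}(s^t)=\sum_{k=1}^t\beta_{s_k}X_{s_k,k}$. On a probability space $(\Omega,\mathcal F,\mathbb P)$ (expectation $\mathbb E$), for each $s^t\in\mathcal S^t$ let $Z_{s^t}=(Z_{s^t,1},\dots,Z_{s^t,t})$ have i.i.d. $\mathcal N(0,1)$ entries, the vectors for distinct $s^t$ being independent, and $\overline{\mathcal Z}(s^t)=\sum_{k=1}^t\beta_{s_k}Z_{s^t,k}$.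 *)

(* Defs.v *)
From Stdlib Require Import Reals List Arith.
Import ListNotations.
Open Scope R_scope.

(* States V = {1,...,N} are encoded as the naturals 0,...,N-1.
   P : nat -> nat -> R is the transition matrix, pi the stationary law,
   beta : nat -> R the vector beta. *)

Definition sumN (N : nat) (f : nat -> R) : R :=
  fold_right Rplus 0 (map f (seq 0 N)).

Fixpoint Ppow (N : nat) (P : nat -> nat -> R) (m : nat) (i j : nat) : R :=
  match m with
  | O => if Nat.eqb i j then 1 else 0
  | S m' => sumN N (fun l => Ppow N P m' i l * P l j)
  end.

Definition row_stochastic (N : nat) (P : nat -> nat -> R) : Prop :=
  (forall i j, (i < N)%nat -> (j < N)%nat -> 0 <= P i j) /\
  (forall i, (i < N)%nat -> sumN N (fun j => P i j) = 1).

Definition irreducible (N : nat) (P : nat -> nat -> R) : Prop :=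
  forall i j, (i < N)%nat -> (j < N)%nat -> exists m, 0 < Ppow N P m i j.

Definition aperiodic (N : nat) (P : nat -> nat -> R) : Prop :=
  forall i, (i < N)%nat -> forall d : nat,
    (forall m, (1 <= m)%nat -> 0 < Ppow N P m i i -> Nat.divide d m) ->
    d = 1%nat.

Definition stationary_pos (N : nat) (P : nat -> nat -> R) (pi : nat -> R) : Prop :=
  (forall i, (i < N)%nat -> 0 < pi i) /\
  sumN N pi = 1 /\
  (forall j, (j < N)%nat -> sumN N (fun i => pi i * P i j) = pi j).

Fixpoint words (N t : nat) : list (list nat) :=
  match t with
  | O => [ [] ]
  | S t' => flat_map (fun i => map (cons i) (words N t')) (seq 0 N)
  end.

Fixpoint chain (P : nat -> nat -> R) (a : nat) (r : list nat) : R :=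
  match r with
  | [] => 1
  | b :: r' => P a b * chain P b r'
  end.

Definition Pword (pi : nat -> R) (P : nat -> nat -> R) (s : list nat) : R :=
  match s with
  | [] => 1
  | a :: r => pi a * chain P a r
  end.

Definition St (N : nat) (pi : nat -> R) (P : nat -> nat -> R) (t : nat)
  : list (list nat) :=
  filter (fun s => if Rlt_dec 0 (Pword pi P s) then true else false) (words N t).

Definition betasq (beta : nat -> R) (s : list nat) : R :=
  fold_right (fun a acc => beta a ^ 2 + acc) 0 s.

Definition phi (N : nat) (pi : nat -> R) (P : nat -> nat -> R) (beta : nat -> R)
  (t : nat) (x : list nat -> R) : R :=
  - / INR t *
  ln (fold_right Rplus 0
        (map (fun s => Pword pi P s * exp (- betasq beta s / 2 + x s))
             (St N pi P t))).

(* Xbar(s^t) = sum_{k=1}^t beta_{s_k} X_{s_k,k}, where the Gaussian X_{i,k}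
   (i in 0..N-1, k in 1..t) is the coordinate  w (i + N*(k-1)). *)
Fixpoint xsum (N : nat) (beta : nat -> R) (w : nat -> R) (k : nat) (s : list nat) : R :=
  match s with
  | [] => 0
  | a :: r => beta a * w (a + N * k)%nat + xsum N beta w (S k) r
  end.
Definition Xbar (N : nat) (beta : nat -> R) (w : nat -> R) (s : list nat) : R :=
  xsum N beta w 0 s.

Fixpoint word_index (l : list (list nat)) (s : list nat) : nat :=
  match l with
  | [] => O
  | u :: l' => if list_eq_dec Nat.eq_dec u s then O else S (word_index l' s)
  end.

(* Zbar(s^t) = sum_{k=1}^t beta_{s_k} Z_{s^t,k}, where Z_{s^t,k} is the coordinate
   w (j*t + (k-1)), j the position of s^t in S^t; so distinct s^t use disjoint
   blocks of coordinates (independent vectors). *)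
Fixpoint zsum (beta : nat -> R) (w : nat -> R) (base k : nat) (s : list nat) : R :=
  match s with
  | [] => 0
  | a :: r => beta a * w (base + k)%nat + zsum beta w base (S k) r
  end.
Definition Zbar (N : nat) (pi : nat -> R) (P : nat -> nat -> R) (beta : nat -> R)
  (t : nat) (w : nat -> R) (s : list nat) : R :=
  zsum beta w (word_index (St N pi P t) s * t)%nat 0 s.

Definition gauss_density (y : R) : R := exp (- y ^ 2 / 2) / sqrt (2 * PI).

Definition improper_int (f : R -> R) (L : R) : Prop :=
  forall eps, 0 < eps -> exists M, forall a b, a <= - M -> M <= b ->
    exists pr : Riemann_integrable f a b, Rabs (RiemannInt pr - L) < eps.

Definition vcons (y : R) (w : nat -> R) : nat -> R :=
  fun n => match n with O => y | S n' => w n' end.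

(* gauss_exp d g v : v = E[g(W_0,...,W_{d-1})] with W_i i.i.d. N(0,1)
   (coordinates >= d are set to 0 and unused), computed as an iterated
   integral against the standard Gaussian density. *)
Fixpoint gauss_exp (d : nat) (g : (nat -> R) -> R) (v : R) : Prop :=
  match d with
  | O => v = g (fun _ => 0)
  | S d' => exists h : R -> R,
      (forall y, gauss_exp d' (fun w => g (vcons y w)) (h y)) /\
      improper_int (fun y => gauss_density y * h y) v
  end.

(* Main.v *)
Require Import Defs.
From Stdlib Require Import Reals List Arith.
From Stdlib Require Import Lra Lia Psatz FunctionalExtensionality Classical_Prop.
From Coquelicot Require Import Coquelicot.
Import ListNotations.
Open Scope R_scope.

Lemma sqrt2pi_ge1 : 1 <= sqrt (2 * PI).
Proof.
  rewrite <- sqrt_1. apply sqrt_le_1_alt. pose proof PI_RGT_0. pose proof PI2_1. lra.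
Qed.

Lemma dens_pos y : 0 < gauss_density y.
Proof.
  unfold gauss_density. apply Rdiv_lt_0_compat. apply exp_pos.
  pose proof sqrt2pi_ge1; lra.
Qed.

Lemma dens_le y : gauss_density y <= exp (- y ^ 2 / 2).
Proof.
  unfold gauss_density. pose proof sqrt2pi_ge1. pose proof (exp_pos (- y^2/2)).
  unfold Rdiv. rewrite <- (Rmult_1_r (exp _)) at 2.
  apply Rmult_le_compat_l. lra.
  rewrite <- Rinv_1. apply Rinv_le_contravar; lra.
Qed.

Lemma exp_neg_le1 x : 0 <= x -> exp (- x) <= 1.
Proof.
  intros. rewrite <- exp_0. destruct (Req_dec x 0). subst. rewrite Ropp_0. lra.
  left. apply exp_increasing. lra.
Qed.

Lemma dens_le1 y : gauss_density y <= 1.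
Proof.
  eapply Rle_trans. apply dens_le.
  replace (- y^2/2) with (- (y^2/2)) by field. apply exp_neg_le1. nra.
Qed.

Lemma exd_cont (f : R -> R) x : ex_derive f x -> continuous f x.
Proof. apply (@ex_derive_continuous R_AbsRing R_NormedModule). Qed.

Lemma dens_cont y : continuous gauss_density y.
Proof.
  apply exd_cont. unfold gauss_density. auto_derive.
  pose proof sqrt2pi_ge1. lra.
Qed.

Definition Lip1 (K : R) (f : R -> R) := forall x y, Rabs (f x - f y) <= K * Rabs (x - y).

Lemma Lip1_K (K : R) f : Lip1 K f -> 0 <= K.
Proof.
  intros H. specialize (H 1 0). pose proof (Rabs_pos (f 1 - f 0)).
  replace (1 - 0) with 1 in H by ring. rewrite Rabs_R1 in H. lra.
Qed.

Lemma Lip1_cont K f x : Lip1 K f -> continuous f x.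
Proof.
  intros HL. pose proof (Lip1_K _ _ HL) as HK.
  apply filterlim_locally. intros eps.
  assert (Hd : 0 < eps / (K + 1)). { apply Rdiv_lt_0_compat. apply cond_pos. lra. }
  exists (mkposreal _ Hd). intros y Hy.
  change (Rabs (f y - f x) < eps).
  change (Rabs (y - x) < eps / (K+1)) in Hy.
  eapply Rle_lt_trans. apply HL.
  apply Rle_lt_trans with ((K+1) * Rabs (y - x)).
  apply Rmult_le_compat_r. apply Rabs_pos. lra.
  apply Rmult_lt_reg_l with (/ (K+1)). apply Rinv_0_lt_compat; lra.
  rewrite <- Rmult_assoc, Rinv_l by lra. rewrite Rmult_1_l.
  unfold Rdiv in Hy. rewrite Rmult_comm. exact Hy.
Qed.

Lemma Lip1_growth K f y : Lip1 K f -> Rabs (f y) <= Rabs (f 0) + K * Rabs y.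
Proof.
  intros H. specialize (H y 0). replace (y - 0) with y in H by ring.
  pose proof (Rabs_triang_inv (f y) (f 0)). lra.
Qed.

Definition Iab (f : R -> R) (a b : R) := RInt (fun y => gauss_density y * f y) a b.

Lemma ex_RInt_dens_cont (f : R -> R) a b : (forall y, continuous f y) ->
  ex_RInt (fun y => gauss_density y * f y) a b.
Proof.
  intros Hc. apply (@ex_RInt_continuous R_CompleteNormedModule). intros z _.
  apply (@continuous_mult R_UniformSpace R_AbsRing gauss_density f). apply dens_cont. apply Hc.
Qed.

Lemma ex_RInt_cont (f : R -> R) a b : (forall y, continuous f y) -> ex_RInt f a b.
Proof. intros Hc. apply (@ex_RInt_continuous R_CompleteNormedModule). intros z _. apply (Hc z). Qed.

Definition ee (M : R) := exp (- M ^ 2 / 2).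

Lemma ee_pos M : 0 < ee M.
Proof. apply exp_pos. Qed.

Lemma tail_int M b :
  RInt (fun y => y * exp (- y ^ 2 / 2)) M b = ee M - ee b.
Proof.
  apply is_RInt_unique.
  replace (ee M - ee b) with (minus ((fun y => - exp (- y^2/2)) b) ((fun y => - exp (- y^2/2)) M))
    by (unfold ee, minus, plus, opp; simpl; ring).
  apply (is_RInt_derive (V:=R_CompleteNormedModule) (fun y => - exp (- y^2/2))).
  - intros x _. auto_derive. auto.
    replace (- (x * (x * 1)) * / 2) with (- x ^ 2 / 2) by field. field.
  - intros x _. apply exd_cont. auto_derive. auto.
Qed.

Definition Cont (f : R -> R) := forall x, continuous f x.

Lemma Cont_plus f g : Cont f -> Cont g -> Cont (fun x => f x + g x).
Proof. intros Hf Hg x. apply (@continuous_plus R_UniformSpace R_AbsRing R_NormedModule f g x); auto. Qed.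
Lemma Cont_mult f g : Cont f -> Cont g -> Cont (fun x => f x * g x).
Proof. intros Hf Hg x. apply (@continuous_mult R_UniformSpace R_AbsRing f g x); auto. Qed.
Lemma Cont_const c : Cont (fun _ => c).
Proof. intros x. apply continuous_const. Qed.
Lemma Cont_id : Cont (fun x => x).
Proof. intros x. apply continuous_id. Qed.
Lemma Cont_opp f : Cont f -> Cont (fun x => - f x).
Proof. intros Hf x. apply (@continuous_opp R_UniformSpace R_AbsRing R_NormedModule f x); auto. Qed.
Lemma Cont_minus f g : Cont f -> Cont g -> Cont (fun x => f x - g x).
Proof. intros. apply Cont_plus; auto. apply Cont_opp; auto. Qed.
Lemma Cont_abs f : Cont f -> Cont (fun x => Rabs (f x)).
Proof. intros Hf x. apply continuous_Rabs_comp. apply Hf. Qed.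
Lemma Cont_dens : Cont gauss_density.
Proof. intros x. apply dens_cont. Qed.
Lemma Cont_Lip K f : Lip1 K f -> Cont f.
Proof. intros H x. eapply Lip1_cont; eauto. Qed.
Lemma Cont_exd f : (forall x, ex_derive f x) -> Cont f.
Proof. intros H x. apply exd_cont. auto. Qed.

Lemma RInt_le_cont (f g : R -> R) a b : a <= b -> Cont f -> Cont g ->
  (forall x, a < x < b -> f x <= g x) -> RInt f a b <= RInt g a b.
Proof.
  intros Hab Hf Hg H. apply RInt_le; auto; apply ex_RInt_cont; auto.
Qed.

Lemma RInt_abs_le_cont (f : R -> R) a b : a <= b -> Cont f ->
  Rabs (RInt f a b) <= RInt (fun t => Rabs (f t)) a b.
Proof. intros. apply abs_RInt_le; auto. apply ex_RInt_cont; auto. Qed.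

Lemma RInt_scal_R (f : R -> R) a b k : Cont f -> RInt (fun x => k * f x) a b = k * RInt f a b.
Proof. intros Hf. apply (RInt_scal (V:=R_CompleteNormedModule)). apply ex_RInt_cont; auto. Qed.

Lemma RInt_plus_R (f g : R -> R) a b : Cont f -> Cont g ->
  RInt (fun x => f x + g x) a b = RInt f a b + RInt g a b.
Proof. intros. apply (RInt_plus (V:=R_CompleteNormedModule)); apply ex_RInt_cont; auto. Qed.

Lemma RInt_minus_R (f g : R -> R) a b : Cont f -> Cont g ->
  RInt (fun x => f x - g x) a b = RInt f a b - RInt g a b.
Proof. intros. apply (RInt_minus (V:=R_CompleteNormedModule)); apply ex_RInt_cont; auto. Qed.

Lemma RInt_Chasles_R (f : R -> R) a b c : Cont f -> RInt f a b + RInt f b c = RInt f a c.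
Proof. intros. apply (RInt_Chasles (V:=R_CompleteNormedModule)); apply ex_RInt_cont; auto. Qed.

Lemma RInt_ext_R (f g : R -> R) a b : (forall x, Rmin a b < x < Rmax a b -> f x = g x) ->
  RInt f a b = RInt g a b.
Proof. apply (RInt_ext (V:=R_CompleteNormedModule)). Qed.

Lemma Cont_densf f : Cont f -> Cont (fun y => gauss_density y * f y).
Proof. intros. apply Cont_mult; auto. apply Cont_dens. Qed.

Lemma Cont_gexp : Cont (fun y => y * exp (- y ^ 2 / 2)).
Proof. apply Cont_exd. intros. auto_derive. auto. Qed.

Lemma tail_bound_pos K f M b : Lip1 K f -> 1 <= M -> M <= b ->
  Rabs (Iab f M b) <= (Rabs (f 0) + K) * ee M.
Proof.
  intros HL HM Hb. pose proof (Lip1_K _ _ HL) as HK. pose proof (Cont_Lip _ _ HL) as Hc.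
  unfold Iab. eapply Rle_trans. apply RInt_abs_le_cont; auto. apply Cont_densf; auto.
  eapply Rle_trans. apply RInt_le_cont with (g := fun y => (Rabs (f 0) + K) * (y * exp (- y ^ 2 / 2))); auto.
  apply Cont_abs, Cont_densf; auto. apply Cont_mult. apply Cont_const. apply Cont_gexp.
  - intros y Hy. rewrite Rabs_mult, (Rabs_pos_eq (gauss_density y)) by (left; apply dens_pos).
    pose proof (Lip1_growth _ _ y HL). rewrite (Rabs_pos_eq y) in H by lra.
    pose proof (dens_le y). pose proof (dens_pos y). pose proof (exp_pos (- y^2/2)).
    pose proof (Rabs_pos (f 0)).
    apply Rle_trans with (exp (- y ^ 2 / 2) * (Rabs (f 0) + K * y)).
    apply Rmult_le_compat; try lra. apply Rabs_pos.
    rewrite (Rmult_comm (exp _)). replace ((Rabs (f 0) + K) * (y * exp (- y ^ 2 / 2)))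
      with (((Rabs (f 0) + K) * y) * exp (- y ^ 2 / 2)) by ring.
    apply Rmult_le_compat_r. lra. nra.
  - rewrite RInt_scal_R by apply Cont_gexp. rewrite tail_int.
    pose proof (ee_pos b). pose proof (Rabs_pos (f 0)). nra.
Qed.

Lemma dens_even y : gauss_density (- y) = gauss_density y.
Proof. unfold gauss_density. f_equal. f_equal. f_equal. ring. Qed.

Lemma Cont_comp_opp f : Cont f -> Cont (fun y => f (- y)).
Proof.
  intros Hf x. apply (@continuous_comp R_UniformSpace R_UniformSpace R_UniformSpace (fun y => - y) f).
  apply (Cont_opp (fun y => y) Cont_id). apply Hf.
Qed.

Lemma RInt_refl (h : R -> R) a b : Cont h -> RInt h a b = RInt (fun y => h (- y)) (- b) (- a).
Proof.
  intros Hh.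
  pose proof (RInt_comp_lin (V:=R_CompleteNormedModule) h (-1) 0 (-a) (-b)) as E.
  replace (-1 * - a + 0) with a in E by ring. replace (-1 * - b + 0) with b in E by ring.
  rewrite <- E by (apply ex_RInt_cont; auto).
  rewrite (RInt_ext _ (fun y => - h (- y))).
  2:{ intros x _. unfold scal; simpl. unfold mult; simpl. replace (-1 * x + 0) with (- x) by ring. ring. }
  rewrite (RInt_opp (V:=R_CompleteNormedModule) (fun y => h (- y))).
  2:{ apply ex_RInt_cont. apply Cont_comp_opp; auto. }
  apply (opp_RInt_swap (V:=R_CompleteNormedModule)). apply ex_RInt_cont. apply Cont_comp_opp; auto.
Qed.

Lemma Lip1_refl K f : Lip1 K f -> Lip1 K (fun y => f (- y)).
Proof. intros H x y. eapply Rle_trans. apply H. replace (- x - - y) with (- (x - y)) by ring. rewrite Rabs_Ropp. lra. Qed.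

Lemma Iab_refl K f a b : Lip1 K f -> Iab f a b = Iab (fun y => f (- y)) (- b) (- a).
Proof.
  intros HL. unfold Iab. rewrite RInt_refl by (apply Cont_densf, (Cont_Lip _ _ HL)).
  apply RInt_ext_R. intros. rewrite dens_even. auto.
Qed.

Lemma tail_bound_neg K f M a : Lip1 K f -> 1 <= M -> a <= - M ->
  Rabs (Iab f a (- M)) <= (Rabs (f 0) + K) * ee M.
Proof.
  intros HL HM Ha. rewrite (Iab_refl K) by auto. rewrite Ropp_involutive.
  replace (f 0) with ((fun y => f (- y)) 0) by (simpl; rewrite Ropp_0; auto).
  apply tail_bound_pos; auto. apply Lip1_refl; auto. lra.
Qed.

Lemma band_bound K f M a b : Lip1 K f -> 1 <= M -> a <= - M -> M <= b ->
  Rabs (Iab f a b - Iab f (- M) M) <= 2 * ((Rabs (f 0) + K) * ee M).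
Proof.
  intros HL HM Ha Hb. pose proof (Cont_densf _ (Cont_Lip _ _ HL)) as Hc.
  unfold Iab in *.
  rewrite <- (RInt_Chasles_R _ a (- M) b Hc), <- (RInt_Chasles_R _ (- M) M b Hc).
  pose proof (tail_bound_pos K f M b HL HM Hb). pose proof (tail_bound_neg K f M a HL HM Ha).
  unfold Iab in *.
  replace (RInt (fun y : R => gauss_density y * f y) a (- M) +
   (RInt (fun y : R => gauss_density y * f y) (- M) M +
    RInt (fun y : R => gauss_density y * f y) M b) -
   RInt (fun y : R => gauss_density y * f y) (- M) M) with
   (RInt (fun y : R => gauss_density y * f y) a (- M) + RInt (fun y : R => gauss_density y * f y) M b) by ring.
  eapply Rle_trans. apply Rabs_triang. lra.
Qed.

Lemma nat_large (A : R) : exists n : nat, A < INR n /\ 1 <= INR n.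
Proof.
  destruct (INR_archimed 1 (Rmax A 1)) as [n Hn]. lra.
  exists n. rewrite Rmult_1_r in Hn. pose proof (Rmax_l A 1). pose proof (Rmax_r A 1). lra.
Qed.

Lemma ee_le M : 1 <= M -> ee M <= 2 / M.
Proof.
  intros HM. unfold ee. replace (- M ^ 2 / 2) with (- (M^2/2)) by field.
  rewrite exp_Ropp. pose proof (exp_ineq1_le (M^2/2)).
  apply Rmult_le_reg_l with (exp (M^2/2)). apply exp_pos.
  rewrite Rinv_r by (apply Rgt_not_eq, exp_pos).
  apply Rmult_le_reg_r with M. lra.
  replace (exp (M ^ 2 / 2) * (2 / M) * M) with (2 * exp (M^2/2)) by (field; lra).
  assert (M <= 2 + M^2) by nra. lra.
Qed.

Lemma ee_le6 M : 1 <= M -> ee M <= 216 / M ^ 6.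
Proof.
  intros HM. unfold ee. replace (- M ^ 2 / 2) with (- (M^2/2)) by field.
  rewrite exp_Ropp.
  assert (E : exp (M^2/2) = exp (M^2/6) * exp (M^2/6) * exp (M^2/6)).
  { rewrite <- !exp_plus. f_equal. field. }
  pose proof (exp_ineq1_le (M^2/6)).
  assert (H6 : M^6/216 <= exp (M^2/2)).
  { rewrite E. replace (M^6/216) with ((M^2/6)*(M^2/6)*(M^2/6)) by field.
    assert (0 <= M^2/6) by nra.
    apply Rmult_le_compat; try nra. }
  assert (0 < M^6) by (apply pow_lt; lra).
  apply Rmult_le_reg_l with (exp (M^2/2)). apply exp_pos.
  rewrite Rinv_r by (apply Rgt_not_eq, exp_pos).
  apply Rmult_le_reg_r with (M^6). auto.
  replace (exp (M ^ 2 / 2) * (216 / M^6) * M^6) with (216 * exp (M^2/2)) by (field; lra).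
  nra.
Qed.

Lemma decay_bound D M : 0 <= D -> 1 <= M -> D * (1 + M) ^ 2 * ee M <= 864 * D / M.
Proof.
  intros HD HM. pose proof (ee_le6 M HM). pose proof (ee_pos M).
  assert (0 < M^6) by (apply pow_lt; lra).
  apply Rle_trans with (D * (4 * M^2) * (216 / M^6)).
  apply Rmult_le_compat; try nra. apply Rmult_le_compat_l; nra.
  unfold Rdiv. replace (D * (4 * M ^ 2) * (216 * / M ^ 6)) with (864 * D / M * / M^3) by (field; lra).
  assert (1 <= M^3) by (replace 1 with (1^3) by ring; apply pow_incr; lra).
  assert (0 <= 864 * D / M) by (unfold Rdiv; apply Rmult_le_pos; [lra| left; apply Rinv_0_lt_compat; lra]).
  apply Rle_trans with (864 * D / M * 1). apply Rmult_le_compat_l; auto.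
  rewrite <- Rinv_1. apply Rinv_le_contravar; lra. lra.
Qed.

Lemma vanish x D : (forall M, 1 <= M -> Rabs x <= D * (1 + M) ^ 2 * ee M) -> x = 0.
Proof.
  intros H. destruct (Req_dec x 0) as [|Hx]; auto. exfalso.
  assert (Hpos : 0 < Rabs x) by (apply Rabs_pos_lt; auto).
  assert (HD : 0 <= D).
  { pose proof (H 1 (Rle_refl 1)). pose proof (ee_pos 1).
    destruct (Rle_dec 0 D); auto. exfalso.
    assert (D * (1+1)^2 * ee 1 < 0). { apply Rmult_neg_pos. nra. auto. } lra. }
  destruct (nat_large (864 * D / Rabs x)) as [n [Hn1 Hn2]].
  pose proof (H (INR n) Hn2). pose proof (decay_bound D (INR n) HD Hn2).
  assert (864 * D / INR n < Rabs x).
  { assert (E1 : 864 * D = (864 * D / Rabs x) * Rabs x) by (field; lra).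
    assert (864 * D < INR n * Rabs x) by (rewrite E1; apply Rmult_lt_compat_r; auto).
    apply Rmult_lt_reg_r with (INR n). lra.
    replace (864 * D / INR n * INR n) with (864 * D) by (field; lra). lra. }
  lra.
Qed.

Definition useq (f : R -> R) (n : nat) := Iab f (- INR n) (INR n).
Definition GI (f : R -> R) : R := real (Lim_seq (useq f)).

Lemma useq_cauchy K f : Lip1 K f -> ex_lim_seq_cauchy (useq f).
Proof.
  intros HL eps. set (C := Rabs (f 0) + K).
  assert (HC : 0 <= C) by (pose proof (Lip1_K _ _ HL); pose proof (Rabs_pos (f 0)); unfold C; lra).
  destruct (nat_large (8 * C / eps)) as [N [HN1 HN2]].
  exists N. intros n m Hn Hm.
  assert (Hn' : INR N <= INR n) by (apply le_INR; auto).
  assert (Hm' : INR N <= INR m) by (apply le_INR; auto).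
  pose proof (band_bound K f (INR N) (- INR n) (INR n) HL HN2 ltac:(lra) ltac:(lra)).
  pose proof (band_bound K f (INR N) (- INR m) (INR m) HL HN2 ltac:(lra) ltac:(lra)).
  fold C in H, H0. unfold useq.
  pose proof (ee_le _ HN2).
  assert (Habs : Rabs (Iab f (- INR n) (INR n) - Iab f (- INR m) (INR m)) <= 4 * C * ee (INR N)).
  { replace (Iab f (- INR n) (INR n) - Iab f (- INR m) (INR m)) with
      ((Iab f (- INR n) (INR n) - Iab f (- INR N) (INR N)) - (Iab f (- INR m) (INR m) - Iab f (- INR N) (INR N))) by ring.
    eapply Rle_trans. apply Rabs_triang. rewrite Rabs_Ropp. lra. }
  eapply Rle_lt_trans. apply Habs.
  apply Rle_lt_trans with (4 * C * (2 / INR N)). apply Rmult_le_compat_l; lra.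
  destruct eps as [e He]; simpl in *.
  assert (E1 : 8 * C = (8 * C / e) * e) by (field; lra).
  assert (8 * C < INR N * e) by (rewrite E1; apply Rmult_lt_compat_r; auto).
  apply Rmult_lt_reg_r with (INR N). lra.
  replace (4 * C * (2 / INR N) * INR N) with (8 * C) by (field; lra). lra.
Qed.

Lemma GI_lim K f : Lip1 K f -> is_lim_seq (useq f) (GI f).
Proof.
  intros HL. pose proof (proj2 (ex_lim_seq_cauchy_corr _) (useq_cauchy K f HL)) as [l Hl].
  unfold GI. rewrite (is_lim_seq_unique _ _ Hl). simpl. auto.
Qed.

Lemma GI_bound K f M : Lip1 K f -> 1 <= M ->
  Rabs (GI f - Iab f (- M) M) <= 2 * ((Rabs (f 0) + K) * ee M).
Proof.
  intros HL HM. pose proof (GI_lim K f HL) as Hl.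
  destruct (nat_large M) as [N [HN _]].
  assert (Hlim : is_lim_seq (fun n => Rabs (useq f n - Iab f (- M) M)) (Rabs (GI f - Iab f (- M) M))).
  { apply (is_lim_seq_abs _ (GI f - Iab f (- M) M)).
    apply is_lim_seq_minus'; auto. apply is_lim_seq_const. }
  assert (Hev : eventually (fun n => Rabs (useq f n - Iab f (- M) M) <= 2 * ((Rabs (f 0) + K) * ee M))).
  { exists N. intros n Hn. assert (INR N <= INR n) by (apply le_INR; auto).
    unfold useq. apply band_bound; auto; lra. }
  pose proof (is_lim_seq_le_loc _ (fun _ => 2 * ((Rabs (f 0) + K) * ee M)) _ _
    Hev Hlim (is_lim_seq_const _)).
  simpl in H. auto.
Qed.

Lemma small_zero x : (forall eps, 0 < eps -> Rabs x < eps) -> x = 0.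
Proof.
  intros H. destruct (Req_dec x 0); auto. exfalso.
  assert (0 < Rabs x) by (apply Rabs_pos_lt; auto).
  specialize (H (Rabs x) H1). lra.
Qed.

Lemma ee_small C eps : 0 <= C -> 0 < eps -> exists M, 1 <= M /\ C * ee M < eps.
Proof.
  intros HC He. destruct (nat_large (2 * C / eps)) as [n [H1 H2]].
  exists (INR n). split; auto. pose proof (ee_le _ H2). pose proof (ee_pos (INR n)).
  apply Rle_lt_trans with (C * (2 / INR n)). apply Rmult_le_compat_l; auto.
  assert (E1 : 2 * C = (2 * C / eps) * eps) by (field; lra).
  assert (2 * C < INR n * eps) by (rewrite E1; apply Rmult_lt_compat_r; auto).
  apply Rmult_lt_reg_r with (INR n). lra.
  replace (C * (2 / INR n) * INR n) with (2 * C) by (field; lra). lra.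
Qed.

Lemma Lip1_C K f : Lip1 K f -> 0 <= Rabs (f 0) + K.
Proof. intros H. pose proof (Lip1_K _ _ H). pose proof (Rabs_pos (f 0)). lra. Qed.

Lemma GI_char K f L D : Lip1 K f ->
  (forall M, 1 <= M -> Rabs (L - Iab f (- M) M) <= D * (1 + M) ^ 2 * ee M) -> L = GI f.
Proof.
  intros HL H. assert (L - GI f = 0); [|lra].
  apply (vanish _ (D + 2 * (Rabs (f 0) + K))). intros M HM.
  pose proof (H M HM). pose proof (GI_bound K f M HL HM). pose proof (Lip1_C _ _ HL).
  pose proof (ee_pos M). assert (1 <= (1 + M)^2) by nra.
  replace (L - GI f) with ((L - Iab f (- M) M) - (GI f - Iab f (- M) M)) by ring.
  eapply Rle_trans. apply Rabs_triang. rewrite Rabs_Ropp.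
  assert (2 * ((Rabs (f 0) + K) * ee M) <= 2 * (Rabs (f 0) + K) * (1 + M) ^ 2 * ee M).
  { replace (2 * ((Rabs (f 0) + K) * ee M)) with (2 * (Rabs (f 0) + K) * 1 * ee M) by ring.
    apply Rmult_le_compat_r. lra. apply Rmult_le_compat_l; lra. }
  lra.
Qed.

Lemma Lip1_lin K1 K2 f g a b : Lip1 K1 f -> Lip1 K2 g ->
  Lip1 (Rabs a * K1 + Rabs b * K2) (fun y => a * f y + b * g y).
Proof.
  intros H1 H2 x y.
  replace (a * f x + b * g x - (a * f y + b * g y)) with (a * (f x - f y) + b * (g x - g y)) by ring.
  eapply Rle_trans. apply Rabs_triang. rewrite !Rabs_mult.
  pose proof (H1 x y). pose proof (H2 x y). pose proof (Rabs_pos a). pose proof (Rabs_pos b).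
  rewrite Rmult_plus_distr_r. apply Rplus_le_compat.
  rewrite Rmult_assoc. apply Rmult_le_compat_l; auto.
  rewrite Rmult_assoc. apply Rmult_le_compat_l; auto.
Qed.

Lemma Iab_lin K1 K2 f g a b u v : Lip1 K1 f -> Lip1 K2 g ->
  Iab (fun y => a * f y + b * g y) u v = a * Iab f u v + b * Iab g u v.
Proof.
  intros H1 H2. pose proof (Cont_densf _ (Cont_Lip _ _ H1)). pose proof (Cont_densf _ (Cont_Lip _ _ H2)).
  unfold Iab. rewrite (RInt_ext_R _ (fun y => a * (gauss_density y * f y) + b * (gauss_density y * g y))).
  2:{ intros. ring. }
  rewrite RInt_plus_R. rewrite !RInt_scal_R; auto.
  apply Cont_mult; auto. apply Cont_const.
  apply Cont_mult; auto. apply Cont_const.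
Qed.

Lemma GI_lin K1 K2 f g a b : Lip1 K1 f -> Lip1 K2 g ->
  GI (fun y => a * f y + b * g y) = a * GI f + b * GI g.
Proof.
  intros H1 H2. symmetry.
  apply (GI_char _ _ _ (2 * (Rabs a * (Rabs (f 0) + K1) + Rabs b * (Rabs (g 0) + K2))) (Lip1_lin _ _ _ _ _ _ H1 H2)).
  intros M HM. rewrite (Iab_lin K1 K2) by auto.
  pose proof (GI_bound _ _ M H1 HM). pose proof (GI_bound _ _ M H2 HM).
  pose proof (Lip1_C _ _ H1). pose proof (Lip1_C _ _ H2). pose proof (ee_pos M).
  pose proof (Rabs_pos a). pose proof (Rabs_pos b).
  replace (a * GI f + b * GI g - (a * Iab f (- M) M + b * Iab g (- M) M)) with
    (a * (GI f - Iab f (- M) M) + b * (GI g - Iab g (- M) M)) by ring.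
  eapply Rle_trans. apply Rabs_triang. rewrite !Rabs_mult.
  assert (1 <= (1 + M)^2) by nra.
  apply Rle_trans with (2 * (Rabs a * (Rabs (f 0) + K1) + Rabs b * (Rabs (g 0) + K2)) * 1 * ee M).
  2:{ apply Rmult_le_compat_r. lra. apply Rmult_le_compat_l; try lra.
      apply Rmult_le_pos. lra. apply Rplus_le_le_0_compat; apply Rmult_le_pos; lra. }
  assert (Rabs a * Rabs (GI f - Iab f (- M) M) <= Rabs a * (2 * ((Rabs (f 0) + K1) * ee M)))
    by (apply Rmult_le_compat_l; auto).
  assert (Rabs b * Rabs (GI g - Iab g (- M) M) <= Rabs b * (2 * ((Rabs (g 0) + K2) * ee M)))
    by (apply Rmult_le_compat_l; auto).
  lra.
Qed.

Lemma GI_mono K1 K2 f g : Lip1 K1 f -> Lip1 K2 g -> (forall y, f y <= g y) -> GI f <= GI g.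
Proof.
  intros H1 H2 Hle.
  assert (Hn : forall n, useq f n <= useq g n).
  2:{ pose proof (is_lim_seq_le _ _ _ _ Hn (GI_lim _ _ H1) (GI_lim _ _ H2)). simpl in H. apply H. }
  intros n. unfold useq, Iab. apply RInt_le_cont.
  pose proof (pos_INR n). lra. apply Cont_densf, (Cont_Lip _ _ H1). apply Cont_densf, (Cont_Lip _ _ H2).
  intros. apply Rmult_le_compat_l. left; apply dens_pos. auto.
Qed.

Lemma GI_ext f g : (forall y, f y = g y) -> GI f = GI g.
Proof. intros H. apply functional_extensionality in H. subst. auto. Qed.

Lemma GI_improper K f : Lip1 K f -> improper_int (fun y => gauss_density y * f y) (GI f).
Proof.
  intros HL eps Heps. pose proof (Lip1_C _ _ HL) as HC.
  destruct (ee_small (4 * (Rabs (f 0) + K)) eps) as [M [HM1 HM2]]; auto. lra.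
  exists M. intros a b Ha Hb.
  assert (Hex : ex_RInt (fun y => gauss_density y * f y) a b).
  { apply ex_RInt_cont. apply Cont_densf, (Cont_Lip _ _ HL). }
  exists (ex_RInt_Reals_0 _ _ _ Hex). rewrite <- RInt_Reals. fold (Iab f a b).
  pose proof (band_bound K f M a b HL HM1 Ha Hb). pose proof (GI_bound K f M HL HM1).
  replace (Iab f a b - GI f) with ((Iab f a b - Iab f (- M) M) - (GI f - Iab f (- M) M)) by ring.
  eapply Rle_lt_trans. apply Rabs_triang. rewrite Rabs_Ropp. lra.
Qed.

Lemma GI_unique K f L : Lip1 K f -> improper_int (fun y => gauss_density y * f y) L -> L = GI f.
Proof.
  intros HL Himp. assert (L - GI f = 0); [|lra]. apply small_zero. intros eps Heps.
  pose proof (Lip1_C _ _ HL) as HC.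
  destruct (Himp (eps / 2)) as [M0 HM0]. lra.
  destruct (ee_small (2 * (Rabs (f 0) + K)) (eps / 2)) as [M1 [HM1 HM1']]; try lra.
  set (M := Rmax M1 (Rabs M0)).
  assert (1 <= M) by (pose proof (Rmax_l M1 (Rabs M0)); unfold M; lra).
  destruct (HM0 (- M) M) as [pr Hpr].
  { pose proof (Rmax_r M1 (Rabs M0)). pose proof (Rle_abs M0). unfold M; lra. }
  { pose proof (Rmax_r M1 (Rabs M0)). pose proof (Rle_abs M0). unfold M; lra. }
  rewrite <- RInt_Reals in Hpr. fold (Iab f (- M) M) in Hpr.
  pose proof (GI_bound K f M HL H).
  assert (ee M <= ee M1).
  { unfold ee. destruct (Req_dec M M1) as [E|E]. rewrite E; lra. left. apply exp_increasing.
    pose proof (Rmax_l M1 (Rabs M0)). fold M in H1. assert (M1 < M) by lra. nra. }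
  assert (2 * ((Rabs (f 0) + K) * ee M) < eps / 2).
  { apply Rle_lt_trans with (2 * (Rabs (f 0) + K) * ee M1); auto.
    rewrite <- Rmult_assoc. apply Rmult_le_compat_l; lra. }
  replace (L - GI f) with (- (Iab f (- M) M - L) - (GI f - Iab f (- M) M)) by ring.
  eapply Rle_lt_trans. apply Rabs_triang. rewrite !Rabs_Ropp. lra.
Qed.

Definition gf (t : R) := exp (- (t * t)).
Definition Gint (x : R) := RInt gf 0 x.
Definition uf (u t : R) := exp (- (u * u) * (1 + t * t)) / (1 + t * t).
Definition Uint (x : R) := RInt (fun t => uf x t) 0 1.

Lemma Cont_gf : Cont gf.
Proof. apply Cont_exd. intros; unfold gf; auto_derive; auto. Qed.

Lemma Cont_uf x : Cont (uf x).
Proof. apply Cont_exd. intros; unfold uf; auto_derive. nra. Qed.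

Lemma Gint_deriv x : is_derive Gint x (gf x).
Proof.
  apply (is_derive_RInt (V:=R_CompleteNormedModule) gf Gint 0 x).
  apply filter_forall. intros b. apply RInt_correct. apply ex_RInt_cont, Cont_gf.
  apply Cont_gf.
Qed.

Lemma uf_deriv u t : is_derive (fun z => uf z t) u (- 2 * u * exp (- (u * u) * (1 + t * t))).
Proof.
  unfold uf. auto_derive. nra. field. nra.
Qed.

Lemma cont2_uf' x t : continuity_2d_pt (fun u v => - 2 * u * exp (- (u * u) * (1 + v * v))) x t.
Proof.
  apply continuity_2d_pt_mult.
  apply continuity_2d_pt_mult. apply continuity_2d_pt_const. apply continuity_2d_pt_id1.
  apply (continuity_1d_2d_pt_comp exp (fun u v => - (u * u) * (1 + v * v))).
  apply derivable_continuous_pt, derivable_pt_exp.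
  apply continuity_2d_pt_mult. apply continuity_2d_pt_opp.
  apply continuity_2d_pt_mult; apply continuity_2d_pt_id1.
  apply continuity_2d_pt_plus. apply continuity_2d_pt_const.
  apply continuity_2d_pt_mult; apply continuity_2d_pt_id2.
Qed.

Lemma Uint_deriv x : is_derive Uint x (- 2 * gf x * Gint x).
Proof.
  unfold Uint.
  pose proof (is_derive_RInt_param uf 0 1 x) as H.
  assert (E : RInt (fun t => Derive (fun u => uf u t) x) 0 1 = - 2 * gf x * Gint x).
  { rewrite (RInt_ext_R _ (fun t => - 2 * gf x * (x * gf (x * t + 0)))).
    2:{ intros t _. replace (Derive (fun u => uf u t) x) with (- 2 * x * exp (- (x * x) * (1 + t * t)))
          by (symmetry; apply is_derive_unique; apply uf_deriv). unfold gf.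
        replace (- (x * x) * (1 + t * t)) with (- (x * x) + - ((x * t + 0) * (x * t + 0))) by ring.
        rewrite exp_plus. ring. }
    rewrite RInt_scal_R.
    2:{ apply Cont_mult. apply Cont_const. intros y.
        apply (@continuous_comp R_UniformSpace R_UniformSpace R_UniformSpace (fun t => x * t + 0) gf).
        apply (Cont_plus (fun t => x * t) (fun _ => 0)). apply Cont_mult. apply Cont_const. apply Cont_id.
        apply Cont_const. apply Cont_gf. }
    f_equal. unfold Gint.
    pose proof (RInt_comp_lin (V:=R_CompleteNormedModule) gf x 0 0 1) as E2.
    rewrite Rmult_0_r, Rplus_0_r, Rmult_1_r, Rplus_0_r in E2.
    rewrite <- E2. apply RInt_ext_R. intros. reflexivity.
    apply ex_RInt_cont, Cont_gf. }
  rewrite <- E. apply H.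
  - apply filter_forall. intros x0 t _. eexists. apply uf_deriv.
  - intros t _. eapply continuity_2d_pt_ext. 2: apply (cont2_uf' x t).
    intros u v. symmetry. apply is_derive_unique. apply uf_deriv.
  - apply filter_forall. intros y. apply ex_RInt_cont. apply Cont_uf.
Qed.

Lemma F_const x : Gint x * Gint x + Uint x = PI / 4.
Proof.
  set (F := fun z => Gint z * Gint z + Uint z).
  assert (HF : forall z, is_derive F z 0).
  { intros z. unfold F.
    apply (is_derive_ext (fun z => plus (mult (Gint z) (Gint z)) (Uint z))). intros; reflexivity.
    replace 0 with (plus (plus (mult (gf z) (Gint z)) (mult (Gint z) (gf z))) (- 2 * gf z * Gint z))
      by (unfold plus, mult; simpl; ring).
    apply (is_derive_plus (K:=R_AbsRing) (V:=R_NormedModule)).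
    apply (is_derive_mult (K:=R_AbsRing)); try apply Gint_deriv. intros; apply Rmult_comm.
    apply Uint_deriv. }
  assert (E0 : F 0 = PI / 4).
  { unfold F, Gint. rewrite RInt_point. unfold zero; simpl. rewrite Rmult_0_l, Rplus_0_l.
    unfold Uint, uf. rewrite (RInt_ext_R _ (fun t => / (1 + t ^ 2))).
    2:{ intros t _. replace (- (0 * 0) * (1 + t * t)) with 0 by ring. rewrite exp_0.
        unfold Rdiv. rewrite Rmult_1_l. f_equal. ring. }
    apply is_RInt_unique.
    replace (PI / 4) with (minus (atan 1) (atan 0)) by (rewrite atan_1, atan_0; unfold minus, plus, opp; simpl; ring).
    apply (is_RInt_derive (V:=R_CompleteNormedModule) atan).
    - intros t _. apply is_derive_Reals. apply derivable_pt_lim_atan.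
    - intros t _. apply exd_cont. auto_derive. nra. }
  rewrite <- E0. fold (F x).
  pose proof (is_RInt_derive (V:=R_CompleteNormedModule) F (fun _ => 0) 0 x) as H.
  assert (H' : is_RInt (fun _ => 0) 0 x (minus (F x) (F 0))).
  { apply H. intros; apply HF. intros; apply continuous_const. }
  apply (is_RInt_unique (V:=R_CompleteNormedModule)) in H'. rewrite (RInt_const (V:=R_CompleteNormedModule)) in H'. unfold scal, minus, plus, opp in H'; simpl in H'.
  unfold mult in H'; simpl in H'. lra.
Qed.

Lemma Uint_bounds x : 0 <= Uint x <= exp (- (x * x)).
Proof.
  unfold Uint. split.
  - apply RInt_ge_0. lra. apply ex_RInt_cont, Cont_uf.
    intros t _. unfold uf. apply Rlt_le, Rdiv_lt_0_compat. apply exp_pos. nra.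
  - apply Rle_trans with (RInt (fun _ => exp (- (x * x))) 0 1).
    apply RInt_le_cont. lra. apply Cont_uf. apply Cont_const.
    intros t _. unfold uf. pose proof (exp_pos (- (x * x) * (1 + t * t))).
    assert (exp (- (x * x) * (1 + t * t)) <= exp (- (x * x))).
    { destruct (Req_dec (x*x*(t*t)) 0) as [E|E].
      replace (- (x * x) * (1 + t * t)) with (- (x*x)) by nra. lra.
      left. apply exp_increasing. nra. }
    unfold Rdiv. apply Rle_trans with (exp (- (x * x) * (1 + t * t)) * 1).
    apply Rmult_le_compat_l. lra. rewrite <- Rinv_1. apply Rinv_le_contravar; nra. lra.
    rewrite (RInt_const (V:=R_CompleteNormedModule)). unfold scal; simpl. unfold mult; simpl. lra.
Qed.

Lemma Gint_nonneg x : 0 <= x -> 0 <= Gint x.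
Proof.
  intros Hx. apply RInt_ge_0; auto. apply ex_RInt_cont, Cont_gf.
  intros. unfold gf. left; apply exp_pos.
Qed.

Lemma sqrtPI_gt1 : 1 < sqrt PI.
Proof. rewrite <- sqrt_1. apply sqrt_lt_1_alt. pose proof PI_RGT_0. pose proof PI2_1. lra. Qed.

Lemma Gint_close x : 0 <= x -> Rabs (Gint x - sqrt PI / 2) <= 2 * exp (- (x * x)).
Proof.
  intros Hx. pose proof (F_const x). pose proof (Uint_bounds x). pose proof (Gint_nonneg x Hx).
  pose proof sqrtPI_gt1. pose proof (sqrt_sqrt PI (Rlt_le _ _ PI_RGT_0)).
  set (s := sqrt PI) in *. set (G := Gint x) in *.
  assert (E : (G - s / 2) * (G + s / 2) = - Uint x) by nra.
  destruct (Rle_dec (s/2) G).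
  - rewrite Rabs_pos_eq by lra. nra.
  - rewrite Rabs_left by lra. nra.
Qed.

Lemma sqrt2_pos : 0 < sqrt 2.
Proof. apply sqrt_lt_R0. lra. Qed.

Lemma Iab_one M : 0 <= M -> Iab (fun _ => 1) (- M) M = 2 / sqrt PI * Gint (M / sqrt 2).
Proof.
  intros HM. set (h := fun y => exp (- y ^ 2 / 2)).
  assert (Ch : Cont h). { apply Cont_exd. intros. unfold h. auto_derive. auto. }
  unfold Iab. rewrite (RInt_ext_R _ (fun y => / sqrt (2 * PI) * h y)).
  2:{ intros. unfold gauss_density, h. unfold Rdiv. ring. }
  rewrite RInt_scal_R by auto.
  rewrite <- (RInt_Chasles_R h (- M) 0 M Ch).
  rewrite (RInt_refl h (- M) 0 Ch). rewrite Ropp_0, Ropp_involutive.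
  rewrite (RInt_ext_R (fun y => h (- y)) h). 2:{ intros. unfold h. f_equal. f_equal. ring. }
  pose proof (RInt_comp_lin (V:=R_CompleteNormedModule) h (sqrt 2) 0 0 (M / sqrt 2)) as E2.
  rewrite Rmult_0_r, Rplus_0_r, Rplus_0_r in E2.
  replace (sqrt 2 * (M / sqrt 2)) with M in E2 by (pose proof sqrt2_pos; field; lra).
  rewrite <- E2 by (apply ex_RInt_cont; auto).
  rewrite (RInt_ext_R _ (fun t => sqrt 2 * gf t)).
  2:{ intros. unfold scal; simpl; unfold mult; simpl. unfold h, gf. rewrite Rplus_0_r.
      f_equal. f_equal. simpl. rewrite Rmult_1_r.
      replace (sqrt 2 * x * (sqrt 2 * x)) with ((sqrt 2 * sqrt 2) * (x * x)) by ring.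
      rewrite sqrt_sqrt by lra. field. }
  rewrite RInt_scal_R by apply Cont_gf. fold (Gint (M / sqrt 2)).
  rewrite sqrt_mult by (pose proof PI_RGT_0; lra).
  pose proof sqrt2_pos. pose proof sqrtPI_gt1. change (Rinv (sqrt 2 * sqrt PI) * (sqrt 2 * Gint (M / sqrt 2) + sqrt 2 * Gint (M / sqrt 2)) = 2 / sqrt PI * Gint (M / sqrt 2)). field. lra.
Qed.

Lemma GI_one : GI (fun _ => 1) = 1.
Proof.
  symmetry. apply (GI_char 0 _ _ 4).
  - intros x y. unfold Rminus. rewrite Rplus_opp_r, Rabs_R0. lra.
  - intros M HM. rewrite Iab_one by lra.
    pose proof (Gint_close (M / sqrt 2)). pose proof sqrt2_pos. pose proof sqrtPI_gt1.
    assert (E : M / sqrt 2 * (M / sqrt 2) = M ^ 2 / 2).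
    { unfold Rdiv. replace (M * / sqrt 2 * (M * / sqrt 2)) with (M * M * / (sqrt 2 * sqrt 2)) by (field; lra).
      rewrite sqrt_sqrt by lra. simpl. field. }
    rewrite E in H. replace (- (M ^ 2 / 2)) with (- M ^ 2 / 2) in H by field. fold (ee M) in H.
    assert (0 <= M / sqrt 2) by (unfold Rdiv; apply Rmult_le_pos; [lra | left; apply Rinv_0_lt_compat; lra]).
    specialize (H H2).
    replace (1 - 2 / sqrt PI * Gint (M / sqrt 2)) with (- (2 / sqrt PI) * (Gint (M / sqrt 2) - sqrt PI / 2))
      by (field; lra).
    rewrite Rabs_mult, Rabs_Ropp, Rabs_pos_eq by (unfold Rdiv; apply Rmult_le_pos; [lra| left; apply Rinv_0_lt_compat; lra]).
    pose proof (ee_pos M). assert (1 <= (1 + M)^2) by nra.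
    apply Rle_trans with (2 / sqrt PI * (2 * ee M)).
    apply Rmult_le_compat_l; auto. unfold Rdiv; apply Rmult_le_pos; [lra| left; apply Rinv_0_lt_compat; lra].
    assert (2 / sqrt PI <= 2).
    { unfold Rdiv. apply Rle_trans with (2 * 1). apply Rmult_le_compat_l. lra.
      rewrite <- Rinv_1. apply Rinv_le_contravar; lra. lra. }
    apply Rle_trans with (2 * (2 * ee M)). apply Rmult_le_compat_r; lra.
    replace (2 * (2 * ee M)) with (4 * 1 * ee M) by ring.
    apply Rmult_le_compat_r. lra. apply Rmult_le_compat_l; lra.
Qed.

Lemma GI_const c : GI (fun _ => c) = c.
Proof.
  assert (L0 : Lip1 0 (fun _ : R => 1)).
  { intros x y. unfold Rminus. rewrite Rplus_opp_r, Rabs_R0. lra. }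
  rewrite (GI_ext _ (fun y => c * 1 + 0 * 1)) by (intros; ring).
  rewrite (GI_lin 0 0 _ _ c 0 L0 L0). rewrite GI_one. ring.
Qed.

Definition Lip2 (K : R) (H : R -> R -> R) :=
  forall x y x' y', Rabs (H x y - H x' y') <= K * (Rabs (x - x') + Rabs (y - y')).

Lemma Lip2_K K H : Lip2 K H -> 0 <= K.
Proof.
  intros HL. specialize (HL 1 0 0 0). pose proof (Rabs_pos (H 1 0 - H 0 0)).
  replace (1 - 0) with 1 in HL by ring. replace (0 - 0) with 0 in HL by ring.
  rewrite Rabs_R1, Rabs_R0 in HL. lra.
Qed.

Lemma Lip2_1 K H y : Lip2 K H -> Lip1 K (fun x => H x y).
Proof.
  intros HL x x'. eapply Rle_trans. apply HL. unfold Rminus at 2. rewrite Rplus_opp_r, Rabs_R0.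
  rewrite Rplus_0_r. lra.
Qed.

Lemma Lip2_2 K H x : Lip2 K H -> Lip1 K (fun y => H x y).
Proof.
  intros HL y y'. eapply Rle_trans. apply HL. unfold Rminus at 1. rewrite Rplus_opp_r, Rabs_R0.
  rewrite Rplus_0_l. lra.
Qed.

Lemma Lip2_swap K H : Lip2 K H -> Lip2 K (fun x y => H y x).
Proof. intros HL x y x' y'. eapply Rle_trans. apply HL. lra. Qed.

Lemma Lip2_cont2 K H x y : Lip2 K H -> continuity_2d_pt H x y.
Proof.
  intros HL eps. pose proof (Lip2_K _ _ HL).
  assert (Hd : 0 < eps / (2 * (K + 1))). { apply Rdiv_lt_0_compat. apply cond_pos. lra. }
  exists (mkposreal _ Hd). intros u v Hu Hv. simpl in Hu, Hv.
  eapply Rle_lt_trans. apply HL.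
  apply Rle_lt_trans with ((K + 1) * (Rabs (u - x) + Rabs (v - y))).
  apply Rmult_le_compat_r. pose proof (Rabs_pos (u - x)); pose proof (Rabs_pos (v - y)); lra. lra.
  apply Rlt_le_trans with ((K+1) * (2 * (eps / (2 * (K + 1))))).
  apply Rmult_lt_compat_l; lra. right. field. lra.
Qed.

Lemma RInt_abs_bound (h : R -> R) c d B : Cont h -> (forall y, Rabs (h y) <= B) ->
  Rabs (RInt h c d) <= Rabs (d - c) * B.
Proof.
  intros Hc HB. destruct (Rle_dec c d).
  - rewrite (Rabs_pos_eq (d - c)) by lra. apply abs_RInt_le_const; auto. apply ex_RInt_cont; auto.
  - rewrite <- (opp_RInt_swap (V:=R_CompleteNormedModule)) by (apply ex_RInt_cont; auto).
    unfold opp; simpl. rewrite Rabs_Ropp. rewrite (Rabs_left (d - c)) by lra.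
    replace (- (d - c)) with (c - d) by ring.
    apply abs_RInt_le_const; auto. lra. apply ex_RInt_cont; auto.
Qed.

Lemma param_Lip K f c d : Lip2 K f -> Lip1 (K * Rabs (d - c)) (fun x => RInt (fun y => f x y) c d).
Proof.
  intros HL x x'. rewrite <- RInt_minus_R by (apply (Cont_Lip K); apply Lip2_2; auto).
  eapply Rle_trans. apply RInt_abs_bound with (B := K * Rabs (x - x')).
  apply Cont_minus; apply (Cont_Lip K); apply Lip2_2; auto.
  intros y. eapply Rle_trans. apply HL. unfold Rminus at 2. rewrite Rplus_opp_r, Rabs_R0, Rplus_0_r. lra.
  right. ring.
Qed.

Lemma fub_box K f a b c d : Lip2 K f ->
  RInt (fun x => RInt (fun y => f x y) c d) a b = RInt (fun y => RInt (fun x => f x y) a b) c d.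
Proof.
  intros HL. pose proof (Lip2_K _ _ HL) as HK.
  set (g := fun x => RInt (fun y => f x y) c d).
  assert (Cg : Cont g) by (apply (Cont_Lip _ _ (param_Lip K f c d HL))).
  set (F := fun z y => RInt (fun x => f x y) a z).
  assert (Cfx : forall y, Cont (fun x => f x y)) by (intros y; apply (Cont_Lip K); apply Lip2_1; auto).
  assert (dF : forall z y, is_derive (fun u => F u y) z (f z y)).
  { intros z y. apply (is_derive_RInt (V:=R_CompleteNormedModule) (fun x => f x y) (fun u => F u y) a z).
    - apply filter_forall. intros b0. apply RInt_correct. apply ex_RInt_cont. apply Cfx.
    - apply Cfx. }
  assert (CF : forall z, Cont (fun y => F z y)).
  { intros z. apply (Cont_Lip (K * Rabs (z - a))). unfold F.
    apply (param_Lip K (fun y x => f x y) a z). apply Lip2_swap. auto. }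
  set (Phi := fun z => RInt g a z).
  set (Psi := fun z => RInt (fun y => F z y) c d).
  assert (dPhi : forall z, is_derive Phi z (g z)).
  { intros z. apply (is_derive_RInt (V:=R_CompleteNormedModule) g Phi a z).
    - apply filter_forall. intros b0. apply RInt_correct. apply ex_RInt_cont. apply Cg.
    - apply Cg. }
  assert (dPsi : forall z, is_derive Psi z (g z)).
  { intros z. unfold Psi.
    replace (g z) with (RInt (fun t => Derive (fun u => F u t) z) c d).
    apply (is_derive_RInt_param F c d z).
    - apply filter_forall. intros x0 t _. eexists. apply dF.
    - intros t _. eapply continuity_2d_pt_ext. 2: apply (Lip2_cont2 K f z t HL).
      intros u v. symmetry. apply is_derive_unique. apply dF.
    - apply filter_forall. intros y. apply ex_RInt_cont. apply CF.
    - unfold g. apply RInt_ext_R. intros t _. apply is_derive_unique. apply dF. }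
  assert (Hd : forall z, is_derive (fun z => Phi z - Psi z) z 0).
  { intros z. replace 0 with (minus (g z) (g z)) by (unfold minus, plus, opp; simpl; ring).
    apply (is_derive_minus (K:=R_AbsRing) (V:=R_NormedModule)); auto. }
  pose proof (is_RInt_derive (V:=R_CompleteNormedModule) (fun z => Phi z - Psi z) (fun _ => 0) a b) as H.
  assert (H' : is_RInt (fun _ => 0) a b (minus (Phi b - Psi b) (Phi a - Psi a))).
  { apply H. intros; apply Hd. intros; apply continuous_const. }
  apply (is_RInt_unique (V:=R_CompleteNormedModule)) in H'. rewrite (RInt_const (V:=R_CompleteNormedModule)) in H'.
  unfold scal, minus, plus, opp in H'; simpl in H'. unfold mult in H'; simpl in H'.
  assert (Phi a = 0). { unfold Phi. rewrite RInt_point. reflexivity. }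
  assert (Psi a = 0).
  { unfold Psi, F. rewrite (RInt_ext_R _ (fun _ => 0)). rewrite (RInt_const (V:=R_CompleteNormedModule)).
    unfold scal; simpl; unfold mult; simpl. ring. intros. rewrite RInt_point. reflexivity. }
  change (Phi b = Psi b). lra.
Qed.

Lemma dens_lip x x' : Rabs (gauss_density x - gauss_density x') <= Rabs (x - x').
Proof.
  set (df := fun y => - y * exp (- y ^ 2 / 2) / sqrt (2 * PI)).
  destruct (MVT_gen gauss_density x' x df) as [c [_ Hc]].
  - intros y _. unfold df, gauss_density. auto_derive. pose proof sqrt2pi_ge1. lra.
    replace (- (y * (y * 1)) * / 2) with (- y ^ 2 / 2) by field. field. pose proof sqrt2pi_ge1. lra.
  - intros y _. apply continuity_pt_filterlim. apply dens_cont.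
  - rewrite Hc. rewrite Rabs_mult. rewrite <- (Rmult_1_l (Rabs (x - x'))) at 2.
    apply Rmult_le_compat_r. apply Rabs_pos.
    unfold df. pose proof sqrt2pi_ge1. pose proof (exp_pos (- c^2/2)).
    unfold Rdiv. rewrite !Rabs_mult. rewrite (Rabs_pos_eq (exp _)) by lra.
    rewrite (Rabs_pos_eq (/ sqrt _)) by (left; apply Rinv_0_lt_compat; lra).
    assert (Rabs (- c) * exp (- c ^ 2 * / 2) <= 1).
    { rewrite Rabs_Ropp. replace (- c ^ 2 * / 2) with (- (c^2/2)) by field. rewrite exp_Ropp.
      pose proof (exp_ineq1_le (c^2/2)). pose proof (exp_pos (c^2/2)).
      apply Rmult_le_reg_r with (exp (c^2/2)). auto. rewrite Rmult_assoc, Rinv_l by lra.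
      assert (Rabs c * Rabs c = c ^ 2) by (rewrite <- Rabs_mult; simpl; rewrite Rmult_1_r; apply Rabs_pos_eq; nra).
      pose proof (Rabs_pos c). nra. }
    replace (- c ^ 2 / 2) with (- c ^ 2 * / 2) in H0 by field.
    apply Rle_trans with (1 * 1). apply Rmult_le_compat; auto.
    apply Rmult_le_pos; [apply Rabs_pos | lra]. left; apply Rinv_0_lt_compat; lra.
    rewrite <- Rinv_1. apply Rinv_le_contravar; lra. lra.
Qed.

Definition clamp (M z : R) := Rmax (- M) (Rmin M z).

Lemma clamp_lip M z z' : Rabs (clamp M z - clamp M z') <= Rabs (z - z').
Proof.
  unfold clamp, Rmax, Rmin.
  destruct (Rle_dec M z), (Rle_dec M z');
  repeat match goal with |- context [Rle_dec ?a ?b] => destruct (Rle_dec a b) end;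
  unfold Rabs; repeat match goal with |- context [Rcase_abs ?a] => destruct (Rcase_abs a) end; lra.
Qed.

Lemma clamp_bound M z : 0 <= M -> Rabs (clamp M z) <= M.
Proof.
  intros HM. unfold clamp, Rmax, Rmin.
  repeat match goal with |- context [Rle_dec ?a ?b] => destruct (Rle_dec a b) end;
  unfold Rabs; repeat match goal with |- context [Rcase_abs ?a] => destruct (Rcase_abs a) end; lra.
Qed.

Lemma clamp_in M z : - M <= z <= M -> clamp M z = z.
Proof.
  intros Hz. unfold clamp, Rmax, Rmin.
  destruct (Rle_dec M z); destruct (Rle_dec (- M) M); destruct (Rle_dec (- M) z); lra.
Qed.

Lemma Lip2_bound K H x y : Lip2 K H -> Rabs (H x y) <= Rabs (H 0 0) + K * (Rabs x + Rabs y).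
Proof.
  intros HL. specialize (HL x y 0 0). rewrite !Rminus_0_r in HL.
  pose proof (Rabs_triang_inv (H x y) (H 0 0)). lra.
Qed.

Lemma Lip2_clampG K H M : Lip2 K H -> 0 <= M ->
  Lip2 (Rabs (H 0 0) + 2 * K * M + K)
    (fun x y => gauss_density x * gauss_density y * H (clamp M x) (clamp M y)).
Proof.
  intros HL HM x y x' y'. pose proof (Lip2_K _ _ HL) as HK.
  set (B := Rabs (H 0 0) + 2 * K * M).
  assert (HB : forall u v, Rabs (H (clamp M u) (clamp M v)) <= B).
  { intros u v. eapply Rle_trans. apply Lip2_bound; eauto.
    pose proof (clamp_bound M u HM). pose proof (clamp_bound M v HM). unfold B. nra. }
  set (dx := gauss_density x). set (dy := gauss_density y).
  set (dx' := gauss_density x'). set (dy' := gauss_density y').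
  set (h := H (clamp M x) (clamp M y)). set (h' := H (clamp M x') (clamp M y')).
  replace (dx * dy * h - dx' * dy' * h') with
    ((dx - dx') * (dy * h) + dx' * ((dy - dy') * h) + dx' * dy' * (h - h')) by ring.
  assert (A1 : Rabs ((dx - dx') * (dy * h)) <= Rabs (x - x') * B).
  { rewrite !Rabs_mult. pose proof (dens_lip x x'). pose proof (dens_le1 y). pose proof (dens_pos y).
    pose proof (HB x y). fold h in H3. rewrite (Rabs_pos_eq dy) by (unfold dy; lra).
    assert (dy * Rabs h <= B).
    { apply Rle_trans with (1 * Rabs h). apply Rmult_le_compat_r. apply Rabs_pos. unfold dy; lra. lra. }
    apply Rmult_le_compat; try apply Rabs_pos; auto. apply Rmult_le_pos. unfold dy; lra. apply Rabs_pos. }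
  assert (A2 : Rabs (dx' * ((dy - dy') * h)) <= Rabs (y - y') * B).
  { rewrite !Rabs_mult. pose proof (dens_lip y y'). pose proof (dens_le1 x'). pose proof (dens_pos x').
    pose proof (HB x y). fold h in H3. rewrite (Rabs_pos_eq dx') by (unfold dx'; lra).
    apply Rle_trans with (1 * (Rabs (y - y') * B)).
    apply Rmult_le_compat; [unfold dx'; lra | apply Rmult_le_pos; apply Rabs_pos | unfold dx'; lra | ].
    apply Rmult_le_compat; try apply Rabs_pos; auto. lra. }
  assert (A3 : Rabs (dx' * dy' * (h - h')) <= K * (Rabs (x - x') + Rabs (y - y'))).
  { rewrite !Rabs_mult. pose proof (dens_le1 x'). pose proof (dens_pos x').
    pose proof (dens_le1 y'). pose proof (dens_pos y').
    rewrite (Rabs_pos_eq dx') by (unfold dx'; lra). rewrite (Rabs_pos_eq dy') by (unfold dy'; lra).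
    assert (Rabs (h - h') <= K * (Rabs (x - x') + Rabs (y - y'))).
    { eapply Rle_trans. apply HL. apply Rmult_le_compat_l; auto.
      pose proof (clamp_lip M x x'). pose proof (clamp_lip M y y'). lra. }
    apply Rle_trans with (1 * 1 * (K * (Rabs (x - x') + Rabs (y - y')))).
    apply Rmult_le_compat; try apply Rabs_pos. apply Rmult_le_pos; unfold dx', dy'; lra.
    apply Rmult_le_compat; unfold dx', dy'; lra. auto. lra. }
  eapply Rle_trans. apply Rabs_triang. eapply Rle_trans. apply Rplus_le_compat_r. apply Rabs_triang.
  unfold B in *. nra.
Qed.

Lemma Lip1_plus_const K f c : Lip1 K f -> Lip1 K (fun y => f y + c).
Proof. intros H x y. replace (f x + c - (f y + c)) with (f x - f y) by ring. apply H. Qed.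

Lemma Lip1_const0 c : Lip1 0 (fun _ : R => c).
Proof. intros x y. unfold Rminus. rewrite Rplus_opp_r, Rabs_R0. lra. Qed.

Lemma GI_plus_const K f c : Lip1 K f -> GI (fun y => f y + c) = GI f + c.
Proof.
  intros HL. rewrite (GI_ext _ (fun y => 1 * f y + c * 1)) by (intros; ring).
  rewrite (GI_lin K 0 f (fun _ => 1) 1 c HL (Lip1_const0 1)). rewrite GI_one. ring.
Qed.

Lemma GI_lip_param K H : Lip2 K H -> Lip1 K (fun x => GI (fun y => H x y)).
Proof.
  intros HL x x'. pose proof (Lip2_K _ _ HL) as HK.
  assert (forall u v, GI (fun y => H u y) <= GI (fun y => H v y) + K * Rabs (u - v)).
  { intros u v. rewrite <- (GI_plus_const K) by (apply Lip2_2; auto).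
    apply (GI_mono K K). apply Lip2_2; auto. apply Lip1_plus_const, Lip2_2; auto.
    intros y. pose proof (HL u y v y). replace (y - y) with 0 in H0 by ring. rewrite Rabs_R0, Rplus_0_r in H0.
    pose proof (Rle_abs (H u y - H v y)). lra. }
  pose proof (H0 x x'). pose proof (H0 x' x). rewrite Rabs_minus_sym in H2.
  apply Rabs_le. lra.
Qed.

Lemma param_Lip_gen K (f : R -> R -> R) c d : (forall x, Cont (f x)) ->
  (forall x x' y, Rabs (f x y - f x' y) <= K * Rabs (x - x')) ->
  Lip1 (K * Rabs (d - c)) (fun x => RInt (f x) c d).
Proof.
  intros Hc Hb x x'. rewrite <- RInt_minus_R by auto.
  eapply Rle_trans. apply RInt_abs_bound with (B := K * Rabs (x - x')).
  apply Cont_minus; auto. intros y. apply Hb. right; ring.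
Qed.

Lemma inner_Lip K H M : Lip2 K H -> Lip1 (K * Rabs (M - - M)) (fun x => Iab (fun y => H x y) (- M) M).
Proof.
  intros HL. pose proof (Lip2_K _ _ HL). unfold Iab.
  apply (param_Lip_gen K (fun x y => gauss_density y * H x y)).
  - intros x. apply Cont_densf. apply (Cont_Lip K). apply Lip2_2; auto.
  - intros x x' y. rewrite <- Rmult_minus_distr_l. rewrite Rabs_mult.
    rewrite Rabs_pos_eq by (left; apply dens_pos). pose proof (dens_le1 y). pose proof (dens_pos y).
    pose proof (Lip2_1 K H y HL x x').
    apply Rle_trans with (1 * Rabs (H x y - H x' y)). apply Rmult_le_compat_r. apply Rabs_pos. lra. lra.
Qed.

Lemma iter_approx K H M : Lip2 K H -> 1 <= M ->
  Rabs (GI (fun x => GI (fun y => H x y)) - Iab (fun x => Iab (fun y => H x y) (- M) M) (- M) M)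
  <= (2 * (Rabs (GI (fun y => H 0 y)) + K) + 4 * (Rabs (H 0 0) + 2 * K)) * (1 + M) ^ 2 * ee M.
Proof.
  intros HL HM. pose proof (Lip2_K _ _ HL) as HK.
  set (h1 := fun x => GI (fun y => H x y)).
  set (inner := fun x => Iab (fun y => H x y) (- M) M).
  assert (L1 : Lip1 K h1) by (apply GI_lip_param; auto).
  assert (L2 : Lip1 (K * Rabs (M - - M)) inner) by (apply inner_Lip; auto).
  pose proof (GI_bound K h1 M L1 HM) as E1.
  assert (E2 : Rabs (Iab h1 (- M) M - Iab inner (- M) M) <=
               (M - - M) * (2 * ((Rabs (H 0 0) + K * M + K) * ee M))).
  { replace (Iab h1 (- M) M - Iab inner (- M) M) with (1 * Iab h1 (- M) M + (-1) * Iab inner (- M) M) by ring.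
    rewrite <- (Iab_lin _ _ _ _ 1 (-1) (- M) M L1 L2). unfold Iab.
    apply abs_RInt_le_const. lra. apply ex_RInt_cont. apply Cont_densf.
    apply (Cont_Lip _ _ (Lip1_lin _ _ _ _ 1 (-1) L1 L2)).
    intros t Ht. rewrite Rabs_mult, Rabs_pos_eq by (left; apply dens_pos).
    pose proof (dens_le1 t). pose proof (dens_pos t).
    replace (1 * h1 t + -1 * inner t) with (h1 t - inner t) by ring.
    unfold h1, inner.
    pose proof (GI_bound K (fun y => H t y) M (Lip2_2 K H t HL) HM). simpl in H2.
    pose proof (Lip2_bound K H t 0 HL). rewrite Rabs_R0 in H3.
    assert (Rabs t <= M) by (apply Rabs_le; lra).
    assert (Rabs (H t 0) + K <= Rabs (H 0 0) + K * M + K) by nra.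
    pose proof (ee_pos M).
    apply Rle_trans with (1 * Rabs (GI (fun y => H t y) - Iab (fun y => H t y) (- M) M)).
    apply Rmult_le_compat_r. apply Rabs_pos. lra. rewrite Rmult_1_l.
    eapply Rle_trans. apply H2. nra. }
  replace (GI h1 - Iab inner (- M) M) with ((GI h1 - Iab h1 (- M) M) + (Iab h1 (- M) M - Iab inner (- M) M)) in * by ring.
  fold h1 inner. replace (GI h1 - Iab inner (- M) M) with ((GI h1 - Iab h1 (- M) M) + (Iab h1 (- M) M - Iab inner (- M) M)) by ring.
  eapply Rle_trans. apply Rabs_triang.
  pose proof (ee_pos M). pose proof (Rabs_pos (h1 0)). pose proof (Rabs_pos (H 0 0)).
  assert (T1 : 2 * ((Rabs (h1 0) + K) * ee M) <= 2 * (Rabs (h1 0) + K) * (1 + M) ^ 2 * ee M).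
  { replace (2 * ((Rabs (h1 0) + K) * ee M)) with (2 * (Rabs (h1 0) + K) * 1 * ee M) by ring.
    apply Rmult_le_compat_r. lra. apply Rmult_le_compat_l. lra. nra. }
  assert (T2 : (M - - M) * (2 * ((Rabs (H 0 0) + K * M + K) * ee M)) <= 4 * (Rabs (H 0 0) + 2 * K) * (1 + M) ^ 2 * ee M).
  { replace ((M - - M) * (2 * ((Rabs (H 0 0) + K * M + K) * ee M))) with (4 * (M * (Rabs (H 0 0) + K * M + K)) * ee M) by ring.
    apply Rmult_le_compat_r. lra. nra. }
  unfold h1 in *. lra.
Qed.

Lemma J_swap K H M : Lip2 K H -> 1 <= M ->
  Iab (fun x => Iab (fun y => H x y) (- M) M) (- M) M =
  Iab (fun y => Iab (fun x => H x y) (- M) M) (- M) M.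
Proof.
  intros HL HM.
  set (G := fun x y => gauss_density x * gauss_density y * H (clamp M x) (clamp M y)).
  assert (LG : Lip2 (Rabs (H 0 0) + 2 * K * M + K) G) by (apply Lip2_clampG; auto; lra).
  assert (Hmm : Rmin (- M) M = - M /\ Rmax (- M) M = M).
  { split. apply Rmin_left; lra. apply Rmax_right; lra. }
  destruct Hmm as [Hmin Hmax].
  transitivity (RInt (fun x => RInt (fun y => G x y) (- M) M) (- M) M).
  - unfold Iab. apply RInt_ext_R. intros x Hx. rewrite Hmin, Hmax in Hx.
    rewrite <- RInt_scal_R. 2:{ apply Cont_densf. apply (Cont_Lip K). apply Lip2_2; auto. }
    apply RInt_ext_R. intros y Hy. rewrite Hmin, Hmax in Hy. unfold G.
    rewrite !clamp_in by lra. ring.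
  - rewrite (fub_box _ G (- M) M (- M) M LG).
    unfold Iab. apply RInt_ext_R. intros y Hy. rewrite Hmin, Hmax in Hy.
    rewrite <- RInt_scal_R. 2:{ apply Cont_densf. apply (Cont_Lip K). apply Lip2_1; auto. }
    apply RInt_ext_R. intros x Hx. rewrite Hmin, Hmax in Hx. unfold G.
    rewrite !clamp_in by lra. ring.
Qed.

Lemma fub_GI K H : Lip2 K H ->
  GI (fun x => GI (fun y => H x y)) = GI (fun y => GI (fun x => H x y)).
Proof.
  intros HL.
  assert (HL' : Lip2 K (fun y x => H x y)) by (apply Lip2_swap; auto).
  set (D1 := 2 * (Rabs (GI (fun y => H 0 y)) + K) + 4 * (Rabs (H 0 0) + 2 * K)).
  set (D2 := 2 * (Rabs (GI (fun x => H x 0)) + K) + 4 * (Rabs (H 0 0) + 2 * K)).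
  assert (GI (fun x => GI (fun y => H x y)) - GI (fun y => GI (fun x => H x y)) = 0); [|lra].
  apply (vanish _ (D1 + D2)). intros M HM.
  pose proof (iter_approx K H M HL HM). pose proof (iter_approx K _ M HL' HM). simpl in H1.
  rewrite (J_swap K H M HL HM) in H0.
  fold D1 in H0. fold D2 in H1.
  match type of H0 with Rabs (?a - ?j) <= _ => match type of H1 with Rabs (?b - _) <= _ =>
    replace (a - b) with ((a - j) - (b - j)) by ring end end.
  eapply Rle_trans. apply Rabs_triang. rewrite Rabs_Ropp. lra.
Qed.

Definition wtl (w : nat -> R) : nat -> R := fun n => w (S n).

Fixpoint sabs (d : nat) (w w' : nat -> R) : R :=
  match d with
  | O => 0
  | S d' => Rabs (w O - w' O) + sabs d' (wtl w) (wtl w')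
  end.

Definition LipD (d : nat) (K : R) (g : (nat -> R) -> R) :=
  0 <= K /\ forall w w', Rabs (g w - g w') <= K * sabs d w w'.

Fixpoint Ed (d : nat) (g : (nat -> R) -> R) : R :=
  match d with
  | O => g (fun _ => 0)
  | S d' => GI (fun y => Ed d' (fun w => g (vcons y w)))
  end.

Lemma sabs_nonneg d w w' : 0 <= sabs d w w'.
Proof.
  revert w w'; induction d; intros; simpl. lra.
  pose proof (Rabs_pos (w O - w' O)). pose proof (IHd (wtl w) (wtl w')). lra.
Qed.

Lemma sabs_refl d w : sabs d w w = 0.
Proof.
  revert w; induction d; intros; simpl. auto. rewrite IHd. unfold Rminus. rewrite Rplus_opp_r, Rabs_R0. ring.
Qed.

Lemma LipD_vcons d K g y : LipD (S d) K g -> LipD d K (fun w => g (vcons y w)).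
Proof.
  intros [HK HL]. split; auto. intros w w'. eapply Rle_trans. apply HL. simpl.
  unfold Rminus at 1. rewrite Rplus_opp_r, Rabs_R0, Rplus_0_l. right. reflexivity.
Qed.

Lemma LipD_lin d K1 K2 g1 g2 a b : LipD d K1 g1 -> LipD d K2 g2 ->
  LipD d (Rabs a * K1 + Rabs b * K2) (fun w => a * g1 w + b * g2 w).
Proof.
  intros [HK1 H1] [HK2 H2]. split.
  pose proof (Rabs_pos a). pose proof (Rabs_pos b). nra.
  intros w w'.
  replace (a * g1 w + b * g2 w - (a * g1 w' + b * g2 w')) with (a * (g1 w - g1 w') + b * (g2 w - g2 w')) by ring.
  eapply Rle_trans. apply Rabs_triang. rewrite !Rabs_mult.
  pose proof (H1 w w'). pose proof (H2 w w'). pose proof (Rabs_pos a). pose proof (Rabs_pos b).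
  rewrite Rmult_plus_distr_r. apply Rplus_le_compat.
  rewrite Rmult_assoc. apply Rmult_le_compat_l; auto.
  rewrite Rmult_assoc. apply Rmult_le_compat_l; auto.
Qed.

Lemma LipD_const d c : LipD d 0 (fun _ => c).
Proof. split. lra. intros. unfold Rminus. rewrite Rplus_opp_r, Rabs_R0. lra. Qed.

Lemma LipD_weaken d K K' g : LipD d K g -> K <= K' -> LipD d K' g.
Proof.
  intros [HK H] HK'. split. lra. intros w w'. eapply Rle_trans. apply H.
  apply Rmult_le_compat_r. apply sabs_nonneg. auto.
Qed.

Lemma Ed_const d c : Ed d (fun _ => c) = c.
Proof.
  induction d; simpl; auto. rewrite (GI_ext _ (fun _ => c)). apply GI_const. intros; apply IHd.
Qed.

Definition MonoP d := forall K1 K2 g1 g2, LipD d K1 g1 -> LipD d K2 g2 ->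
  (forall w, g1 w <= g2 w) -> Ed d g1 <= Ed d g2.
Definition LinP d := forall K1 K2 g1 g2 a b, LipD d K1 g1 -> LipD d K2 g2 ->
  Ed d (fun w => a * g1 w + b * g2 w) = a * Ed d g1 + b * Ed d g2.

Lemma Ed_plus_const_of d : LinP d -> forall K g c, LipD d K g -> Ed d (fun w => g w + c) = Ed d g + c.
Proof.
  intros HLn K g c HL. pose proof (HLn K 0 g (fun _ => 1) 1 c HL (LipD_const d 1)).
  rewrite Ed_const in H. replace (fun w => g w + c) with (fun w => 1 * g w + c * 1).
  rewrite H. ring. apply functional_extensionality. intros; ring.
Qed.

Lemma param_lip_of d : MonoP d -> LinP d -> forall K g, LipD (S d) K g ->
  Lip1 K (fun y => Ed d (fun w => g (vcons y w))).
Proof.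
  intros HM HLn K g HL.
  assert (A : forall u v, Ed d (fun w => g (vcons u w)) <= Ed d (fun w => g (vcons v w)) + K * Rabs (u - v)).
  { intros u v. rewrite <- (Ed_plus_const_of d HLn K) by (apply LipD_vcons; auto).
    apply (HM K K). apply LipD_vcons; auto.
    { destruct (LipD_vcons d K g v HL) as [HK H]. split; auto. intros w w'.
      replace (g (vcons v w) + K * Rabs (u - v) - (g (vcons v w') + K * Rabs (u - v))) with (g (vcons v w) - g (vcons v w')) by ring.
      apply H. }
    intros w. destruct HL as [HK HL]. pose proof (HL (vcons u w) (vcons v w)). simpl in H.
    rewrite sabs_refl, Rplus_0_r in H. pose proof (Rle_abs (g (vcons u w) - g (vcons v w))). lra. }
  intros x x'. pose proof (A x x'). pose proof (A x' x). rewrite Rabs_minus_sym in H0.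
  apply Rabs_le. lra.
Qed.

Lemma Ed_ML d : MonoP d /\ LinP d.
Proof.
  induction d.
  - split.
    + intros K1 K2 g1 g2 _ _ H. simpl. apply H.
    + intros K1 K2 g1 g2 a b _ _. simpl. auto.
  - destruct IHd as [HM HLn]. split.
    + intros K1 K2 g1 g2 H1 H2 Hle. simpl.
      apply (GI_mono K1 K2). apply (param_lip_of d HM HLn); auto. apply (param_lip_of d HM HLn); auto.
      intros y. apply (HM K1 K2). apply LipD_vcons; auto. apply LipD_vcons; auto. intros; apply Hle.
    + intros K1 K2 g1 g2 a b H1 H2. simpl.
      rewrite (GI_ext _ (fun y => a * Ed d (fun w => g1 (vcons y w)) + b * Ed d (fun w => g2 (vcons y w)))).
      apply (GI_lin K1 K2). apply (param_lip_of d HM HLn); auto. apply (param_lip_of d HM HLn); auto.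
      intros y. apply (HLn K1 K2). apply LipD_vcons; auto. apply LipD_vcons; auto.
Qed.

Lemma Ed_mono d K1 K2 g1 g2 : LipD d K1 g1 -> LipD d K2 g2 ->
  (forall w, g1 w <= g2 w) -> Ed d g1 <= Ed d g2.
Proof. apply (proj1 (Ed_ML d)). Qed.

Lemma Ed_lin d K1 K2 g1 g2 a b : LipD d K1 g1 -> LipD d K2 g2 ->
  Ed d (fun w => a * g1 w + b * g2 w) = a * Ed d g1 + b * Ed d g2.
Proof. apply (proj2 (Ed_ML d)). Qed.

Lemma Ed_param_lip d K g : LipD (S d) K g -> Lip1 K (fun y => Ed d (fun w => g (vcons y w))).
Proof. apply param_lip_of; [apply Ed_ML | apply Ed_ML]. Qed.

Lemma Ed_ext d g1 g2 : (forall w, g1 w = g2 w) -> Ed d g1 = Ed d g2.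
Proof. intros H. apply functional_extensionality in H. subst. auto. Qed.

Lemma Ed_diff d K1 K2 g1 g2 c : LipD d K1 g1 -> LipD d K2 g2 ->
  (forall w, Rabs (g1 w - g2 w) <= c) -> Rabs (Ed d g1 - Ed d g2) <= c.
Proof.
  intros H1 H2 Hc.
  assert (A : forall K1 K2 g1 g2, LipD d K1 g1 -> LipD d K2 g2 -> (forall w, Rabs (g1 w - g2 w) <= c) ->
    Ed d g1 <= Ed d g2 + c).
  { clear. intros K1 K2 g1 g2 H1 H2 Hc.
    rewrite <- (Ed_plus_const_of d (proj2 (Ed_ML d)) K2) by auto.
    apply (Ed_mono d K1 K2); auto.
    { destruct H2 as [HK H]. split; auto. intros w w'.
      replace (g2 w + c - (g2 w' + c)) with (g2 w - g2 w') by ring. apply H. }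
    intros w. pose proof (Hc w). pose proof (Rle_abs (g1 w - g2 w)). lra. }
  pose proof (A _ _ _ _ H1 H2 Hc).
  pose proof (A _ _ _ _ H2 H1 ltac:(intros w; rewrite Rabs_minus_sym; auto)).
  apply Rabs_le. lra.
Qed.

Lemma Ed_gauss d K g : LipD d K g -> gauss_exp d g (Ed d g).
Proof.
  revert K g. induction d; intros K g HL; simpl. auto.
  exists (fun y => Ed d (fun w => g (vcons y w))). split.
  - intros y. apply (IHd K). apply LipD_vcons; auto.
  - apply (GI_improper K). apply Ed_param_lip; auto.
Qed.

Lemma Ed_gauss_unique d K g v : LipD d K g -> gauss_exp d g v -> v = Ed d g.
Proof.
  revert K g v. induction d; intros K g v HL Hg; simpl in *. auto.
  destruct Hg as [h [Hh Himp]].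
  assert (E : h = fun y => Ed d (fun w => g (vcons y w))).
  { apply functional_extensionality. intros y. apply (IHd K). apply LipD_vcons; auto. auto. }
  subst h. apply (GI_unique K). apply Ed_param_lip; auto. auto.
Qed.

Definition shiftn (k : nat) (w : nat -> R) : nat -> R := fun n => w (k + n)%nat.

Lemma sabs_ext d w1 w2 v1 v2 : (forall n, w1 n = w2 n) -> (forall n, v1 n = v2 n) ->
  sabs d w1 v1 = sabs d w2 v2.
Proof.
  intros H1 H2. apply functional_extensionality in H1. apply functional_extensionality in H2. subst. auto.
Qed.

Lemma sabs_shift k d w w' : sabs (k + d) w w' = sabs k w w' + sabs d (shiftn k w) (shiftn k w').
Proof.
  revert w w'. induction k; intros w w'; simpl.
  - rewrite Rplus_0_l. apply sabs_ext; intros; reflexivity.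
  - rewrite IHk, Rplus_assoc. reflexivity.
Qed.

Lemma LipD_shift d k K g : LipD d K g -> LipD (k + d) K (fun w => g (shiftn k w)).
Proof.
  intros [HK H]. split; auto. intros w w'. eapply Rle_trans. apply H.
  apply Rmult_le_compat_l; auto. rewrite sabs_shift. pose proof (sabs_nonneg k w w'). lra.
Qed.

Lemma LipD_pad d k K g : LipD d K g -> LipD (d + k) K g.
Proof.
  intros [HK H]. split; auto. intros w w'. eapply Rle_trans. apply H.
  apply Rmult_le_compat_l; auto. rewrite sabs_shift. pose proof (sabs_nonneg k (shiftn d w) (shiftn d w')). lra.
Qed.

Lemma Ed_drop d K g : LipD d K g -> Ed (S d) (fun w => g (wtl w)) = Ed d g.
Proof.
  intros HL. simpl. change (GI (fun _ => Ed d g) = Ed d g). apply GI_const.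
Qed.

Lemma Ed_dropn k d K g : LipD d K g -> Ed (k + d) (fun w => g (shiftn k w)) = Ed d g.
Proof.
  revert g K. induction k; intros g K HL.
  - simpl. apply Ed_ext. intros w. f_equal.
  - change (Ed (S (k + d)) (fun w => (fun w' => g (shiftn k w')) (wtl w)) = Ed d g).
    rewrite (Ed_drop _ K). apply (IHk g K); auto. apply LipD_shift; auto.
Qed.

Lemma Ed_pad d k K g : LipD d K g -> Ed (d + k) g = Ed d g.
Proof.
  revert g K. induction d; intros g K HL.
  - simpl. rewrite (Ed_ext k g (fun _ => g (fun _ => 0))). apply Ed_const.
    intros w. destruct HL as [HK H]. pose proof (H w (fun _ => 0)). simpl in H0.
    rewrite Rmult_0_r in H0. pose proof (Rabs_pos (g w - g (fun _ => 0))).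
    assert (g w - g (fun _ => 0) = 0). { apply Rabs_eq_0. lra. } lra.
  - simpl. apply GI_ext. intros y. apply (IHd _ K). apply LipD_vcons; auto.
Qed.

Definition sw (i n : nat) : nat := if Nat.eqb n i then S i else if Nat.eqb n (S i) then i else n.
Definition swapw (i : nat) (w : nat -> R) : nat -> R := fun n => w (sw i n).

Lemma swap_vcons0 x y w : swapw 0 (vcons x (vcons y w)) = vcons y (vcons x w).
Proof. apply functional_extensionality. intros [|[|n]]; reflexivity. Qed.

Lemma swap_vconsS i y w : swapw (S i) (vcons y w) = vcons y (swapw i w).
Proof.
  apply functional_extensionality. intros [|n]. reflexivity.
  unfold swapw, sw. simpl. destruct (Nat.eqb n i); simpl; auto.
  destruct (Nat.eqb n (S i)); simpl; auto.
Qed.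

Lemma tl_swapS i w : wtl (swapw (S i) w) = swapw i (wtl w).
Proof.
  apply functional_extensionality. intros n. unfold wtl, swapw, sw. simpl.
  destruct (Nat.eqb n i); simpl; auto. destruct (Nat.eqb n (S i)); simpl; auto.
Qed.

Lemma sabs_swap d i w w' : (S i < d)%nat -> sabs d (swapw i w) (swapw i w') = sabs d w w'.
Proof.
  revert d w w'. induction i; intros d w w' Hd.
  - destruct d as [|[|d]]; try lia. simpl.
    assert (wtl (wtl (swapw 0 w)) = wtl (wtl w)) by (apply functional_extensionality; intros; reflexivity).
    assert (wtl (wtl (swapw 0 w')) = wtl (wtl w')) by (apply functional_extensionality; intros; reflexivity).
    rewrite H, H0. unfold wtl, swapw, sw. simpl. ring.
  - destruct d as [|d]; try lia. simpl. rewrite !tl_swapS. rewrite IHi by lia. reflexivity.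
Qed.

Lemma LipD_swap d K g i : LipD d K g -> (S i < d)%nat -> LipD d K (fun w => g (swapw i w)).
Proof.
  intros [HK H] Hi. split; auto. intros w w'. eapply Rle_trans. apply H. rewrite sabs_swap; auto. lra.
Qed.

Lemma Lip2_of_Ed d K g : LipD (S (S d)) K g ->
  Lip2 K (fun x y => Ed d (fun w => g (vcons x (vcons y w)))).
Proof.
  intros HL x y x' y'. destruct HL as [HK H].
  apply (Ed_diff d K K).
  apply (LipD_vcons d K (fun w => g (vcons x w)) y). apply LipD_vcons. split; auto.
  apply (LipD_vcons d K (fun w => g (vcons x' w)) y'). apply LipD_vcons. split; auto.
  intros w. eapply Rle_trans. apply H. simpl. rewrite sabs_refl. right. unfold wtl. simpl.
  f_equal. ring.
Qed.

Lemma Ed_swap_adj i d K g : LipD d K g -> (S i < d)%nat -> Ed d (fun w => g (swapw i w)) = Ed d g.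
Proof.
  revert d K g. induction i; intros d K g HL Hd.
  - destruct d as [|[|d]]; try lia. simpl.
    rewrite (GI_ext _ (fun x => GI (fun y => Ed d (fun w => g (vcons y (vcons x w)))))).
    2:{ intros x. apply GI_ext. intros y. apply Ed_ext. intros w. rewrite swap_vcons0. auto. }
    symmetry. apply (fub_GI K (fun x y => Ed d (fun w => g (vcons x (vcons y w))))).
    apply Lip2_of_Ed; auto.
  - destruct d as [|d]; try lia. simpl. apply GI_ext. intros y.
    rewrite (Ed_ext d _ (fun w => (fun w' => g (vcons y w')) (swapw i w))).
    2:{ intros w. rewrite swap_vconsS. auto. }
    apply (IHi d K (fun w0 => g (vcons y w0))). apply LipD_vcons; auto. lia.
Qed.

Definition tr (c c' n : nat) : nat := if Nat.eqb n c then c' else if Nat.eqb n c' then c else n.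

Ltac eqb_simpl := repeat (match goal with |- context [Nat.eqb ?a ?b] =>
  first [rewrite (Nat.eqb_refl a) | rewrite (proj2 (Nat.eqb_neq a b)) by lia] end; cbv beta iota).

Lemma tr_decomp c c' n : (S c < c')%nat -> tr c c' n = sw c (tr (S c) c' (sw c n)).
Proof.
  intros H. unfold tr, sw.
  destruct (Nat.eq_dec n c) as [E1|H1]; [subst n; eqb_simpl; auto|].
  destruct (Nat.eq_dec n (S c)) as [E2|H2]; [subst n; eqb_simpl; auto|].
  destruct (Nat.eq_dec n c') as [E3|H3]; [subst n; eqb_simpl; auto|].
  eqb_simpl. auto.
Qed.

Lemma tr_base c n : tr c (S c) n = sw c n.
Proof. unfold tr, sw. reflexivity. Qed.

Lemma Ed_tr_aux gap : forall c d K g, (c + S gap < d)%nat ->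
  LipD d K g -> LipD d K (fun w => g (fun n => w (tr c (c + S gap) n))) /\
  Ed d (fun w => g (fun n => w (tr c (c + S gap) n))) = Ed d g.
Proof.
  induction gap; intros c d K g Hd HL.
  - replace (c + 1)%nat with (S c) by lia.
    assert (E : (fun w => g (fun n => w (tr c (S c) n))) = (fun w => g (swapw c w))).
    { apply functional_extensionality. intros w. f_equal. }
    rewrite E. split. apply LipD_swap; auto; lia. apply (Ed_swap_adj c d K); auto; lia.
  - set (c' := (c + S (S gap))%nat).
    set (g1 := fun w => g (swapw c w)).
    assert (L1 : LipD d K g1) by (apply LipD_swap; auto; unfold c' in *; lia).
    destruct (IHgap (S c) d K g1 ltac:(unfold c' in *; lia) L1) as [L2 E2].
    replace (S c + S gap)%nat with c' in L2, E2 by (unfold c'; lia).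
    set (g2 := fun w => g1 (fun n => w (tr (S c) c' n))) in *.
    assert (E : (fun w => g (fun n => w (tr c c' n))) = (fun w => g2 (swapw c w))).
    { apply functional_extensionality. intros w. unfold g2, g1, swapw. f_equal.
      apply functional_extensionality. intros n. rewrite tr_decomp; auto. unfold c'; lia. }
    rewrite E. split. apply LipD_swap; auto; unfold c' in *; lia.
    rewrite (Ed_swap_adj c d K g2); auto; try (unfold c' in *; lia). rewrite E2.
    apply (Ed_swap_adj c d K); auto. unfold c' in *; lia.
Qed.

Lemma Ed_tr c c' d K g : (c < c')%nat -> (c' < d)%nat -> LipD d K g ->
  LipD d K (fun w => g (fun n => w (tr c c' n))) /\
  Ed d (fun w => g (fun n => w (tr c c' n))) = Ed d g.
Proof.
  intros H1 H2 HL. replace c' with (c + S (c' - c - 1))%nat by lia.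
  apply Ed_tr_aux; auto. lia.
Qed.

Lemma uniq_divmod t j i j' i' : (i < t)%nat -> (i' < t)%nat -> (j * t + i = j' * t + i')%nat -> j = j' /\ i = i'.
Proof.
  intros Hi Hi' E. destruct (lt_eq_lt_dec j j') as [[Hl|He]|Hl].
  - assert (j' * t >= S j * t)%nat by (apply Nat.mul_le_mono_r; lia). simpl in H. lia.
  - subst. lia.
  - assert (j * t >= S j' * t)%nat by (apply Nat.mul_le_mono_r; lia). simpl in H. lia.
Qed.

Fixpoint gsum (beta : nat -> R) (f : nat -> nat -> nat) (w : nat -> R) (k : nat) (s : list nat) : R :=
  match s with
  | [] => 0
  | a :: r => beta a * w (f k a) + gsum beta f w (S k) r
  end.

Fixpoint cfg (beta : nat -> R) (f : nat -> nat -> nat) (x : nat) (k : nat) (s : list nat) : R :=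
  match s with
  | [] => 0
  | a :: r => (if Nat.eqb (f k a) x then beta a else 0) + cfg beta f x (S k) r
  end.

Fixpoint bsum (beta : nat -> R) (s : list nat) : R :=
  match s with [] => 0 | a :: r => Rabs (beta a) + bsum beta r end.

Lemma bsum_nonneg beta s : 0 <= bsum beta s.
Proof. induction s; simpl. lra. pose proof (Rabs_pos (beta a)). lra. Qed.

Lemma xsum_gsum N beta w k s : xsum N beta w k s = gsum beta (fun k a => (a + N * k)%nat) w k s.
Proof. revert k; induction s; intros k; simpl; auto. rewrite IHs. auto. Qed.

Lemma zsum_gsum beta w base k s : zsum beta w base k s = gsum beta (fun k a => (base + k)%nat) w k s.
Proof. revert k; induction s; intros k; simpl; auto. rewrite IHs. auto. Qed.

Definition w00 (c c' : nat) (w : nat -> R) : nat -> R :=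
  fun n => if Nat.eqb n c then 0 else if Nat.eqb n c' then 0 else w n.

Lemma gsum_decomp beta f w c c' k s : c <> c' ->
  gsum beta f w k s = gsum beta f (w00 c c' w) k s + cfg beta f c k s * w c + cfg beta f c' k s * w c'.
Proof.
  intros Hc. revert k; induction s; intros k; simpl. ring.
  rewrite IHs.
  destruct (Nat.eqb_spec (f k a) c) as [e|e]; destruct (Nat.eqb_spec (f k a) c') as [e'|e']; try lia.
  - assert (w00 c c' w (f k a) = 0) by (unfold w00; rewrite e, Nat.eqb_refl; reflexivity).
    rewrite H, e. ring.
  - assert (w00 c c' w (f k a) = 0).
    { unfold w00. rewrite e'. rewrite (proj2 (Nat.eqb_neq c' c)) by lia. rewrite Nat.eqb_refl. reflexivity. }
    rewrite H, e'. ring.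
  - assert (w00 c c' w (f k a) = w (f k a)).
    { unfold w00. rewrite (proj2 (Nat.eqb_neq _ c)) by lia. rewrite (proj2 (Nat.eqb_neq _ c')) by lia. reflexivity. }
    rewrite H. ring.
Qed.

Lemma gsum_ext_pos beta f g w1 w2 k s :
  (forall i, (i < length s)%nat -> w1 (f (k + i)%nat (nth i s 0%nat)) = w2 (g (k + i)%nat (nth i s 0%nat))) ->
  gsum beta f w1 k s = gsum beta g w2 k s.
Proof.
  revert k; induction s; intros k H; simpl; auto.
  pose proof (H 0%nat ltac:(simpl; lia)). simpl in H0. rewrite Nat.add_0_r in H0. rewrite H0.
  f_equal. apply IHs. intros i Hi. pose proof (H (S i) ltac:(simpl; lia)). simpl in H1.
  replace (S k + i)%nat with (k + S i)%nat by lia. auto.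
Qed.

Lemma cfg_zero beta f x k s : (forall i, (i < length s)%nat -> f (k + i)%nat (nth i s 0%nat) <> x) ->
  cfg beta f x k s = 0.
Proof.
  revert k; induction s; intros k H; simpl; auto.
  pose proof (H 0%nat ltac:(simpl; lia)). simpl in H0. rewrite Nat.add_0_r in H0.
  destruct (Nat.eqb_spec (f k a) x); try lia. rewrite IHs. ring.
  intros i Hi. pose proof (H (S i) ltac:(simpl; lia)). simpl in H1.
  replace (S k + i)%nat with (k + S i)%nat by lia. auto.
Qed.

Lemma cfg_one beta f x k s i0 : (i0 < length s)%nat -> f (k + i0)%nat (nth i0 s 0%nat) = x ->
  (forall i, (i < length s)%nat -> i <> i0 -> f (k + i)%nat (nth i s 0%nat) <> x) ->
  cfg beta f x k s = beta (nth i0 s 0%nat).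
Proof.
  revert k i0; induction s; intros k i0 H1 H2 H3; simpl in *. lia.
  destruct i0 as [|i0].
  - rewrite Nat.add_0_r in H2. rewrite H2, Nat.eqb_refl. rewrite cfg_zero. ring.
    intros i Hi. pose proof (H3 (S i) ltac:(lia) ltac:(lia)). simpl in H.
    replace (S k + i)%nat with (k + S i)%nat by lia. auto.
  - pose proof (H3 0%nat ltac:(lia) ltac:(lia)). rewrite Nat.add_0_r in H.
    destruct (Nat.eqb_spec (f k a) x); try lia.
    rewrite (IHs (S k) i0); try lia. ring.
    replace (S k + i0)%nat with (k + S i0)%nat by lia. auto.
    intros i Hi Hne. pose proof (H3 (S i) ltac:(lia) ltac:(lia)). simpl in H0.
    replace (S k + i)%nat with (k + S i)%nat by lia. auto.
Qed.

Lemma sabs_ge D c w w' : (c < D)%nat -> Rabs (w c - w' c) <= sabs D w w'.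
Proof.
  revert c w w'. induction D; intros c w w' H. lia. simpl.
  destruct c. pose proof (sabs_nonneg D (wtl w) (wtl w')). lra.
  pose proof (IHD c (wtl w) (wtl w') ltac:(lia)). change (wtl w c) with (w (S c)) in H0. change (wtl w' c) with (w' (S c)) in H0. pose proof (Rabs_pos (w 0%nat - w' 0%nat)). lra.
Qed.

Lemma gsum_lip beta f w w' k s D :
  (forall i, (i < length s)%nat -> (f (k + i)%nat (nth i s 0%nat) < D)%nat) ->
  Rabs (gsum beta f w k s - gsum beta f w' k s) <= bsum beta s * sabs D w w'.
Proof.
  revert k; induction s; intros k H; simpl. rewrite Rminus_0_r, Rabs_R0. lra.
  pose proof (H 0%nat ltac:(simpl; lia)). simpl in H0. rewrite Nat.add_0_r in H0.
  assert (IH : Rabs (gsum beta f w (S k) s - gsum beta f w' (S k) s) <= bsum beta s * sabs D w w').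
  { apply IHs. intros i Hi. pose proof (H (S i) ltac:(simpl; lia)). simpl in H1.
    replace (S k + i)%nat with (k + S i)%nat by lia. auto. }
  replace (beta a * w (f k a) + gsum beta f w (S k) s - (beta a * w' (f k a) + gsum beta f w' (S k) s))
    with (beta a * (w (f k a) - w' (f k a)) + (gsum beta f w (S k) s - gsum beta f w' (S k) s)) by ring.
  eapply Rle_trans. apply Rabs_triang. rewrite Rabs_mult.
  pose proof (sabs_ge D _ w w' H0). pose proof (Rabs_pos (beta a)).
  assert (Rabs (beta a) * Rabs (w (f k a) - w' (f k a)) <= Rabs (beta a) * sabs D w w') by (apply Rmult_le_compat_l; auto).
  lra.
Qed.

Lemma words_prop N t s : In s (words N t) -> length s = t /\ (forall a, In a s -> (a < N)%nat).
Proof.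
  revert s. induction t; intros s H; simpl in H.
  - destruct H as [<-|[]]. simpl. split; auto. intros a [].
  - apply in_flat_map in H. destruct H as [i [Hi Hs]]. apply in_map_iff in Hs. destruct Hs as [r [<- Hr]].
    apply in_seq in Hi. destruct (IHt r Hr) as [Hl Ha]. simpl. split. lia.
    intros a [<-|Ha']. lia. auto.
Qed.

Lemma St_prop N pi P t s : In s (St N pi P t) -> In s (words N t) /\ 0 < Pword pi P s.
Proof.
  unfold St. intros H. apply filter_In in H. destruct H as [H1 H2]. split; auto.
  destruct (Rlt_dec 0 (Pword pi P s)); auto. discriminate.
Qed.

Lemma word_index_prop l s : In s l -> (word_index l s < length l)%nat /\ nth (word_index l s) l [] = s.
Proof.
  induction l; intros H; simpl in *. destruct H.
  destruct (list_eq_dec Nat.eq_dec a s). subst. split; auto. lia.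
  destruct H. congruence. destruct (IHl H). split; auto. lia.
Qed.

Lemma word_index_inj l s s' : In s l -> In s' l -> word_index l s = word_index l s' -> s = s'.
Proof.
  intros H1 H2 E. destruct (word_index_prop l s H1) as [_ E1]. destruct (word_index_prop l s' H2) as [_ E2].
  rewrite <- E1, <- E2, E. auto.
Qed.

Definition lsum (g : list nat -> R) (l : list (list nat)) : R := fold_right Rplus 0 (map g l).

Lemma lsum_cons g s l : lsum g (s :: l) = g s + lsum g l.
Proof. reflexivity. Qed.

Lemma lsum_le g h l : (forall s, In s l -> g s <= h s) -> lsum g l <= lsum h l.
Proof.
  induction l; intros H; unfold lsum in *; simpl. lra.
  apply Rplus_le_compat. apply H; simpl; auto. apply IHl. intros; apply H; simpl; auto.
Qed.

Lemma lsum_nonneg g l : (forall s, In s l -> 0 <= g s) -> 0 <= lsum g l.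
Proof.
  intros H. assert (Z : forall l0, lsum (fun _ => 0) l0 = 0).
  { induction l0; unfold lsum in *; simpl. lra. rewrite IHl0. lra. }
  rewrite <- (Z l). apply lsum_le; auto.
Qed.

Lemma lsum_ge_elem g l s : (forall s, In s l -> 0 <= g s) -> In s l -> g s <= lsum g l.
Proof.
  induction l; intros H Hs; simpl in Hs. destruct Hs.
  rewrite lsum_cons. destruct Hs as [<-|Hs].
  pose proof (lsum_nonneg g l ltac:(intros; apply H; simpl; auto)). lra.
  pose proof (IHl ltac:(intros; apply H; simpl; auto) Hs). pose proof (H a ltac:(simpl; auto)). lra.
Qed.

Lemma lsum_ext_in g h l : (forall s, In s l -> g s = h s) -> lsum g l = lsum h l.
Proof. intros H. unfold lsum. f_equal. apply map_ext_in. auto. Qed.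

Lemma lsum_scal k g l : lsum (fun s => k * g s) l = k * lsum g l.
Proof. induction l; unfold lsum in *; simpl. ring. rewrite IHl. ring. Qed.

Lemma lsum_plus g h l : lsum (fun s => g s + h s) l = lsum g l + lsum h l.
Proof. induction l; unfold lsum in *; simpl. ring. rewrite IHl. ring. Qed.

Lemma lsum_pos g l : l <> [] -> (forall s, In s l -> 0 < g s) -> 0 < lsum g l.
Proof.
  destruct l as [|a l]. congruence. intros _ H. rewrite lsum_cons.
  pose proof (H a ltac:(simpl; auto)). pose proof (lsum_nonneg g l ltac:(intros; left; apply H; simpl; auto)). lra.
Qed.

Lemma phi_unfold N pi P beta t x :
  phi N pi P beta t x = - / INR t * ln (lsum (fun s => Pword pi P s * exp (- betasq beta s / 2 + x s)) (St N pi P t)).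
Proof. reflexivity. Qed.

Lemma phi_ext_in N pi P beta t x x' : (forall s, In s (St N pi P t) -> x s = x' s) ->
  phi N pi P beta t x = phi N pi P beta t x'.
Proof.
  intros H. rewrite !phi_unfold. f_equal. f_equal. apply lsum_ext_in. intros s Hs. rewrite H; auto.
Qed.

Lemma ln_sum_lip (l : list (list nat)) (p y y' : list nat -> R) :
  (forall s, In s l -> 0 < p s) ->
  ln (lsum (fun s => p s * exp (y s)) l) <= ln (lsum (fun s => p s * exp (y' s)) l) + lsum (fun s => Rabs (y s - y' s)) l.
Proof.
  intros Hp. set (d := lsum (fun s => Rabs (y s - y' s)) l).
  destruct l as [|a l0].
  - unfold d, lsum; simpl. lra.
  - set (l := a :: l0) in *.
    assert (Hne : l <> []) by (unfold l; congruence).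
    assert (P1 : 0 < lsum (fun s => p s * exp (y s)) l).
    { apply lsum_pos; auto. intros. apply Rmult_lt_0_compat; auto. apply exp_pos. }
    assert (P2 : 0 < lsum (fun s => p s * exp (y' s)) l).
    { apply lsum_pos; auto. intros. apply Rmult_lt_0_compat; auto. apply exp_pos. }
    assert (Hle : lsum (fun s => p s * exp (y s)) l <= exp d * lsum (fun s => p s * exp (y' s)) l).
    { rewrite <- lsum_scal. apply lsum_le. intros s Hs.
      assert (Rabs (y s - y' s) <= d).
      { apply (lsum_ge_elem (fun s => Rabs (y s - y' s))); auto. intros; apply Rabs_pos. }
      pose proof (Rle_abs (y s - y' s)).
      replace (exp d * (p s * exp (y' s))) with (p s * exp (d + y' s)) by (rewrite exp_plus; ring).
      apply Rmult_le_compat_l. left; auto.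
      destruct (Req_dec (y s) (d + y' s)) as [E|E]. rewrite E; lra. left; apply exp_increasing. lra. }
    apply ln_le in Hle; auto. rewrite ln_mult, ln_exp in Hle; auto. lra. apply exp_pos.
Qed.

Lemma phi_lip N pi P beta t x x' : (1 <= t)%nat ->
  Rabs (phi N pi P beta t x - phi N pi P beta t x') <=
  / INR t * lsum (fun s => Rabs (x s - x' s)) (St N pi P t).
Proof.
  intros Ht. rewrite !phi_unfold.
  assert (HP : forall s, In s (St N pi P t) -> 0 < Pword pi P s) by (intros; apply (St_prop N pi P t s); auto).
  pose proof (ln_sum_lip _ _ (fun s => - betasq beta s / 2 + x s) (fun s => - betasq beta s / 2 + x' s) HP).
  pose proof (ln_sum_lip _ _ (fun s => - betasq beta s / 2 + x' s) (fun s => - betasq beta s / 2 + x s) HP).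
  simpl in H, H0.
  rewrite (lsum_ext_in (fun s => Rabs (- betasq beta s / 2 + x s - (- betasq beta s / 2 + x' s))) (fun s => Rabs (x s - x' s))) in H
    by (intros; f_equal; ring).
  rewrite (lsum_ext_in (fun s => Rabs (- betasq beta s / 2 + x' s - (- betasq beta s / 2 + x s))) (fun s => Rabs (x s - x' s))) in H0
    by (intros; rewrite Rabs_minus_sym; f_equal; ring).
  assert (Hit : 0 < / INR t) by (apply Rinv_0_lt_compat; apply lt_0_INR; lia).
  replace (- / INR t * ln (lsum (fun s => Pword pi P s * exp (- betasq beta s / 2 + x s)) (St N pi P t)) -
   - / INR t * ln (lsum (fun s => Pword pi P s * exp (- betasq beta s / 2 + x' s)) (St N pi P t)))
   with (- / INR t * (ln (lsum (fun s => Pword pi P s * exp (- betasq beta s / 2 + x s)) (St N pi P t)) -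
      ln (lsum (fun s => Pword pi P s * exp (- betasq beta s / 2 + x' s)) (St N pi P t)))) by ring.
  rewrite Rabs_mult, Rabs_Ropp, Rabs_pos_eq by lra.
  apply Rmult_le_compat_l. lra. apply Rabs_le. lra.
Qed.

Definition Kc beta (ws : list (list nat)) (t : nat) : R := / INR t * lsum (bsum beta) ws.

Lemma LipD_model N pi P beta t (F : list nat -> nat -> nat -> nat) D : (1 <= t)%nat ->
  (forall s, In s (St N pi P t) -> forall i, (i < length s)%nat -> (F s i (nth i s 0%nat) < D)%nat) ->
  LipD D (Kc beta (St N pi P t) t) (fun w => phi N pi P beta t (fun s => gsum beta (F s) w 0 s)).
Proof.
  intros Ht HF. split.
  - unfold Kc. apply Rmult_le_pos. left; apply Rinv_0_lt_compat, lt_0_INR; lia.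
    apply lsum_nonneg. intros; apply bsum_nonneg.
  - intros w w'. eapply Rle_trans. apply phi_lip; auto. unfold Kc. rewrite Rmult_assoc.
    apply Rmult_le_compat_l. left; apply Rinv_0_lt_compat, lt_0_INR; lia.
    rewrite Rmult_comm, <- lsum_scal. apply lsum_le. intros s Hs.
    rewrite Rmult_comm. apply gsum_lip. intros i Hi. apply HF; auto.
Qed.

Definition leqb (s s0 : list nat) : bool := if list_eq_dec Nat.eq_dec s s0 then true else false.

Lemma T_decomp (l : list (list nat)) (q alpha : list nat -> R) (s0 : list nat) (b X Y : R) :
  (forall s, In s l -> s <> s0 -> alpha s = 0 \/ alpha s = b) ->
  lsum (fun s => q s * exp (if leqb s s0 then b * X else alpha s * Y)) l =
  lsum (fun s => if leqb s s0 then q s else 0) l * exp (b * X) +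
  lsum (fun s => if leqb s s0 then 0 else if Req_EM_T (alpha s) b then q s else 0) l * exp (b * Y) +
  lsum (fun s => if leqb s s0 then 0 else if Req_EM_T (alpha s) b then 0 else q s) l.
Proof.
  induction l as [|a l IH]; intros H. unfold lsum; simpl. ring.
  rewrite !lsum_cons. rewrite IH by (intros; apply H; simpl; auto).
  unfold leqb. destruct (list_eq_dec Nat.eq_dec a s0).
  - ring.
  - destruct (Req_EM_T (alpha a) b) as [E|E].
    + rewrite E. ring.
    + destruct (H a ltac:(simpl; auto) n) as [E0|E0]; [|congruence]. rewrite E0, Rmult_0_l, exp_0. ring.
Qed.

Lemma supermod (l : list (list nat)) (q alpha : list nat -> R) (s0 : list nat) (b u u' : R) :
  (forall s, In s l -> 0 < q s) -> In s0 l ->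
  (forall s, In s l -> s <> s0 -> alpha s = 0 \/ alpha s = b) ->
  let T := fun X Y => lsum (fun s => q s * exp (if leqb s s0 then b * X else alpha s * Y)) l in
  ln (T u u) + ln (T u' u') <= ln (T u' u) + ln (T u u').
Proof.
  intros Hq Hs0 Ha T. unfold T. rewrite !(T_decomp l q alpha s0 b) by auto.
  set (a0 := lsum (fun s => if leqb s s0 then q s else 0) l).
  set (a1 := lsum (fun s => if leqb s s0 then 0 else if Req_EM_T (alpha s) b then q s else 0) l).
  set (C := lsum (fun s => if leqb s s0 then 0 else if Req_EM_T (alpha s) b then 0 else q s) l).
  assert (H0 : 0 < a0).
  { unfold a0. apply Rlt_le_trans with ((fun s => if leqb s s0 then q s else 0) s0).
    simpl. unfold leqb. destruct (list_eq_dec Nat.eq_dec s0 s0); [apply Hq; auto|congruence].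
    apply (lsum_ge_elem (fun s => if leqb s s0 then q s else 0) l s0); auto.
    intros s Hs. destruct (leqb s s0). left; auto. lra. }
  assert (H1 : 0 <= a1).
  { apply lsum_nonneg. intros s Hs. destruct (leqb s s0). lra. destruct (Req_EM_T (alpha s) b). left; auto. lra. }
  assert (H2 : 0 <= C).
  { apply lsum_nonneg. intros s Hs. destruct (leqb s s0). lra. destruct (Req_EM_T (alpha s) b). lra. left; auto. }
  set (E := exp (b * u)). set (E' := exp (b * u')).
  assert (0 < E) by apply exp_pos. assert (0 < E') by apply exp_pos.
  rewrite <- !ln_mult by nra.
  apply ln_le. apply Rmult_lt_0_compat; nra.
  assert (0 <= a0 * a1 * (E - E') ^ 2) by (apply Rmult_le_pos; [nra | apply pow2_ge_0]).
  nra.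
Qed.

Definition fm (N t m j k a : nat) : nat :=
  if Nat.ltb (j * t + k) m then (N * t + (j * t + k))%nat else (a + N * k)%nat.

Definition Fm N pi P beta t m : (nat -> R) -> R :=
  fun w => phi N pi P beta t (fun s => gsum beta (fm N t m (word_index (St N pi P t) s)) w 0 s).

Lemma St_mem N pi P t s : In s (St N pi P t) ->
  length s = t /\ forall i, (i < t)%nat -> (nth i s 0%nat < N)%nat.
Proof.
  intros H. destruct (St_prop _ _ _ _ _ H) as [Hw _]. destruct (words_prop _ _ _ Hw) as [Hl Ha].
  split; auto. intros i Hi. apply Ha. apply nth_In. lia.
Qed.

Lemma fm_bound N pi P t m s i : (m <= length (St N pi P t) * t)%nat -> In s (St N pi P t) ->
  (i < length s)%nat -> (fm N t m (word_index (St N pi P t) s) i (nth i s 0%nat) < N * t + length (St N pi P t) * t)%nat.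
Proof.
  intros Hm Hs Hi. destruct (St_mem _ _ _ _ _ Hs) as [Hl Ha]. rewrite Hl in Hi.
  pose proof (Ha i Hi). destruct (word_index_prop _ _ Hs) as [Hj _].
  set (j := word_index (St N pi P t) s) in *. set (L := length (St N pi P t)) in *.
  unfold fm. destruct (Nat.ltb_spec (j * t + i) m).
  - assert (S j * t <= L * t)%nat by (apply Nat.mul_le_mono_r; lia). simpl in H1. lia.
  - assert (N * S i <= N * t)%nat by (apply Nat.mul_le_mono_l; lia). rewrite Nat.mul_succ_r in H1. lia.
Qed.

Lemma Fm_lip N pi P beta t m : (1 <= t)%nat -> (m <= length (St N pi P t) * t)%nat ->
  LipD (N * t + length (St N pi P t) * t) (Kc beta (St N pi P t) t) (Fm N pi P beta t m).
Proof.
  intros Ht Hm. unfold Fm. apply LipD_model; auto. intros s Hs i Hi. apply fm_bound; auto.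
Qed.

Lemma fm_eq_c N t m j i a a0 k0 : (i < t)%nat -> (a < N)%nat -> (a0 < N)%nat -> (k0 < t)%nat ->
  fm N t m j i a = (a0 + N * k0)%nat -> i = k0 /\ a = a0 /\ ~ (j * t + i < m)%nat.
Proof.
  intros Hi Ha Ha0 Hk0 E. unfold fm in E. destruct (Nat.ltb_spec (j * t + i) m).
  - assert (N * S k0 <= N * t)%nat by (apply Nat.mul_le_mono_l; lia). rewrite Nat.mul_succ_r in H0. lia.
  - destruct (uniq_divmod N i a k0 a0 Ha Ha0) as [E1 E2]. lia. split; auto. split; auto. lia.
Qed.

Lemma fm_neq_c' N t m j i a : (i < t)%nat -> (a < N)%nat -> fm N t m j i a <> (N * t + m)%nat.
Proof.
  intros Hi Ha. unfold fm. destruct (Nat.ltb_spec (j * t + i) m). lia.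
  assert (N * S i <= N * t)%nat by (apply Nat.mul_le_mono_l; lia). rewrite Nat.mul_succ_r in H0. lia.
Qed.

Lemma fmS_eq_c' N t m j i a : (i < t)%nat -> (a < N)%nat -> fm N t (S m) j i a = (N * t + m)%nat -> (j * t + i = m)%nat.
Proof.
  intros Hi Ha. unfold fm. destruct (Nat.ltb_spec (j * t + i) (S m)). lia.
  assert (N * S i <= N * t)%nat by (apply Nat.mul_le_mono_l; lia). rewrite Nat.mul_succ_r in H0. lia.
Qed.

Lemma fm_same N t m j i a : (j * t + i <> m)%nat -> fm N t (S m) j i a = fm N t m j i a.
Proof.
  intros H. unfold fm. destruct (Nat.ltb_spec (j * t + i) (S m)); destruct (Nat.ltb_spec (j * t + i) m); auto; lia.
Qed.

Lemma pointwise N pi P beta t m j0 k0 s0 (w : nat -> R) :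
  (1 <= t)%nat -> (m = j0 * t + k0)%nat -> (k0 < t)%nat ->
  In s0 (St N pi P t) -> word_index (St N pi P t) s0 = j0 ->
  let a0 := nth k0 s0 0%nat in
  let c := (a0 + N * k0)%nat in
  let c' := (N * t + m)%nat in
  let v := fun n => w (tr c c' n) in
  Fm N pi P beta t (S m) w + Fm N pi P beta t (S m) v <= Fm N pi P beta t m w + Fm N pi P beta t m v.
Proof.
  intros Ht Hm Hk0 Hs0 Hj0 a0 c c' v.
  set (ws := St N pi P t) in *.
  destruct (St_mem _ _ _ _ _ Hs0) as [Hl0 Ha0']. assert (Ha0 : (a0 < N)%nat) by (apply Ha0'; auto).
  assert (Hcc : c <> c').
  { unfold c, c'. assert (N * S k0 <= N * t)%nat by (apply Nat.mul_le_mono_l; lia).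
    rewrite Nat.mul_succ_r in H. lia. }
  set (b := beta a0).
  set (A := fun s => gsum beta (fm N t m (word_index ws s)) (w00 c c' w) 0 s).
  set (al := fun s => cfg beta (fm N t m (word_index ws s)) c 0 s).
  set (u := w c). set (u' := w c').
  assert (Hv00 : w00 c c' v = w00 c c' w).
  { apply functional_extensionality. intros n. unfold w00, v, tr.
    destruct (Nat.eqb_spec n c); auto. destruct (Nat.eqb_spec n c'); auto. }
  assert (Hvc : v c = u') by (unfold v, tr; rewrite Nat.eqb_refl; auto).
  assert (Hvc' : v c' = u).
  { unfold v, tr. rewrite (proj2 (Nat.eqb_neq c' c)) by lia. rewrite Nat.eqb_refl. auto. }
  assert (Zc' : forall s, In s ws -> cfg beta (fm N t m (word_index ws s)) c' 0 s = 0).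
  { intros s Hs. destruct (St_mem _ _ _ _ _ Hs) as [Hl Ha]. apply cfg_zero. intros i Hi. simpl.
    apply fm_neq_c'. lia. apply Ha. lia. }
  assert (X1 : forall s, In s ws -> forall w', gsum beta (fm N t m (word_index ws s)) w' 0 s =
     gsum beta (fm N t m (word_index ws s)) (w00 c c' w') 0 s + al s * w' c).
  { intros s Hs w'. rewrite (gsum_decomp _ _ w' c c') by auto. rewrite Zc' by auto. unfold al. ring. }
  assert (X0 : al s0 = b).
  { unfold al. rewrite Hj0. apply (cfg_one _ _ _ 0 s0 k0). lia.
    simpl. unfold fm. rewrite <- Hm. rewrite Nat.ltb_irrefl. auto.
    intros i Hi Hne. simpl. intros E. destruct (fm_eq_c N t m j0 i (nth i s0 0%nat) a0 k0); auto; try lia.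
    apply Ha0'. lia. }
  assert (X5 : forall s, In s ws -> s <> s0 -> al s = 0 \/ al s = b).
  { intros s Hs Hne. destruct (St_mem _ _ _ _ _ Hs) as [Hl Ha]. unfold al.
    destruct (Nat.eq_dec (fm N t m (word_index ws s) k0 (nth k0 s 0%nat)) c) as [E|E].
    - right. destruct (fm_eq_c _ _ _ _ _ _ _ _ Hk0 (Ha k0 Hk0) Ha0 Hk0 E) as [_ [Ea _]].
      unfold b. rewrite <- Ea. apply cfg_one. lia. simpl. auto.
      intros i Hi Hne' E'. simpl in E'. assert (Hit : (i < t)%nat) by lia.
      destruct (fm_eq_c N t m (word_index ws s) i (nth i s 0%nat) a0 k0 Hit (Ha i Hit) Ha0 Hk0 E'). lia.
    - left. apply cfg_zero. intros i Hi E'. simpl in E'.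
      assert (Hit : (i < t)%nat) by lia.
      destruct (fm_eq_c N t m (word_index ws s) i (nth i s 0%nat) a0 k0 Hit (Ha i Hit) Ha0 Hk0 E') as [-> _]. auto. }
  assert (X3o : forall s, In s ws -> s <> s0 -> forall w',
     gsum beta (fm N t (S m) (word_index ws s)) w' 0 s = gsum beta (fm N t m (word_index ws s)) w' 0 s).
  { intros s Hs Hne w'. destruct (St_mem _ _ _ _ _ Hs) as [Hl Ha]. apply gsum_ext_pos. intros i Hi.
    rewrite fm_same. auto. intros E. rewrite <- Hj0 in Hm.
    destruct (uniq_divmod t (word_index ws s) i (word_index ws s0) k0) as [E1 _]; try lia.
    apply Hne. apply (word_index_inj ws); auto. }
  assert (X3s : forall w', w00 c c' w' = w00 c c' w ->
     gsum beta (fm N t (S m) j0) w' 0 s0 = A s0 + b * w' c').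
  { intros w' Hw'.
    rewrite (gsum_decomp _ _ w' c c') by auto.
    assert (C1 : cfg beta (fm N t (S m) j0) c 0 s0 = 0).
    { apply cfg_zero. intros i Hi E. simpl in E.
      assert (Hit : (i < t)%nat) by lia.
      destruct (fm_eq_c N t (S m) j0 i (nth i s0 0%nat) a0 k0 Hit (Ha0' i Hit) Ha0 Hk0 E) as [-> [_ H3]]. lia. }
    assert (C2 : cfg beta (fm N t (S m) j0) c' 0 s0 = b).
    { apply (cfg_one _ _ _ 0 s0 k0). lia. simpl. unfold fm.
      destruct (Nat.ltb_spec (j0 * t + k0) (S m)). unfold c'. lia. lia.
      intros i Hi Hne E. simpl in E. apply fmS_eq_c' in E; try lia. apply Ha0'. lia. }
    rewrite C1, C2, Hw'. unfold A. rewrite Hj0.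
    assert (gsum beta (fm N t (S m) j0) (w00 c c' w) 0 s0 = gsum beta (fm N t m j0) (w00 c c' w) 0 s0).
    { apply gsum_ext_pos. intros i Hi. simpl. destruct (Nat.eq_dec i k0) as [->|Hne].
      - unfold w00. fold a0.
        assert (E1 : fm N t (S m) j0 k0 a0 = c').
        { unfold fm. destruct (Nat.ltb_spec (j0 * t + k0) (S m)). unfold c'. lia. lia. }
        assert (E2 : fm N t m j0 k0 a0 = c).
        { unfold fm. rewrite <- Hm. rewrite Nat.ltb_irrefl. auto. }
        rewrite E1, E2. rewrite (proj2 (Nat.eqb_neq c' c)) by lia. rewrite !Nat.eqb_refl. auto.
      - rewrite fm_same. auto. intros E. destruct (uniq_divmod t j0 i j0 k0); lia. }
    rewrite H. ring. }
  set (Phi := fun X Y => phi N pi P beta t (fun s => A s + (if leqb s s0 then b * X else al s * Y))).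
  assert (E1 : Fm N pi P beta t m w = Phi u u).
  { unfold Fm, Phi. apply phi_ext_in. intros s Hs. fold ws. rewrite (X1 s Hs w). unfold leqb.
    destruct (list_eq_dec Nat.eq_dec s s0). subst s. rewrite X0. auto. auto. }
  assert (E2 : Fm N pi P beta t m v = Phi u' u').
  { unfold Fm, Phi. apply phi_ext_in. intros s Hs. fold ws. rewrite (X1 s Hs v). rewrite Hv00, Hvc. unfold leqb.
    destruct (list_eq_dec Nat.eq_dec s s0). subst s. rewrite X0. auto. auto. }
  assert (E3 : Fm N pi P beta t (S m) w = Phi u' u).
  { unfold Fm, Phi. apply phi_ext_in. intros s Hs. fold ws. unfold leqb.
    destruct (list_eq_dec Nat.eq_dec s s0).
    - subst s. rewrite Hj0. apply X3s. auto.
    - rewrite X3o by auto. rewrite (X1 s Hs w). auto. }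
  assert (E4 : Fm N pi P beta t (S m) v = Phi u u').
  { unfold Fm, Phi. apply phi_ext_in. intros s Hs. fold ws. unfold leqb.
    destruct (list_eq_dec Nat.eq_dec s s0).
    - subst s. rewrite Hj0. rewrite X3s by auto. rewrite Hvc'. auto.
    - rewrite X3o by auto. rewrite (X1 s Hs v). rewrite Hv00, Hvc. auto. }
  rewrite E1, E2, E3, E4.
  set (q := fun s => Pword pi P s * exp (- betasq beta s / 2 + A s)).
  assert (HPhi : forall X Y, Phi X Y = - / INR t * ln (lsum (fun s => q s * exp (if leqb s s0 then b * X else al s * Y)) ws)).
  { intros X Y. unfold Phi. rewrite phi_unfold. fold ws. f_equal. f_equal. apply lsum_ext_in. intros s _.
    unfold q. rewrite Rmult_assoc, <- exp_plus. f_equal. f_equal. ring. }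
  rewrite !HPhi.
  pose proof (supermod ws q al s0 b u u') as SM. simpl in SM.
  assert (Hq : forall s, In s ws -> 0 < q s).
  { intros s Hs. unfold q. apply Rmult_lt_0_compat. apply (St_prop N pi P t s); auto. apply exp_pos. }
  specialize (SM Hq Hs0 X5).
  assert (Hit : 0 < / INR t) by (apply Rinv_0_lt_compat; apply lt_0_INR; lia).
  nra.
Qed.

Lemma step N pi P beta t m : (1 <= t)%nat -> (m < length (St N pi P t) * t)%nat ->
  Ed (N * t + length (St N pi P t) * t) (Fm N pi P beta t (S m)) <=
  Ed (N * t + length (St N pi P t) * t) (Fm N pi P beta t m).
Proof.
  intros Ht Hm.
  set (D := (N * t + length (St N pi P t) * t)%nat).
  set (j0 := (m / t)%nat). set (k0 := (m mod t)%nat).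
  assert (Hmj : m = (j0 * t + k0)%nat).
  { pose proof (Nat.div_mod_eq m t). unfold j0, k0. rewrite Nat.mul_comm. lia. }
  assert (Hk0 : (k0 < t)%nat) by (apply Nat.mod_upper_bound; lia).
  set (K := Kc beta (St N pi P t) t).
  assert (L0 : LipD D K (Fm N pi P beta t m)) by (apply Fm_lip; auto; lia).
  assert (L1 : LipD D K (Fm N pi P beta t (S m))) by (apply Fm_lip; auto; lia).
  destruct (Classical_Prop.classic (exists s0, In s0 (St N pi P t) /\ word_index (St N pi P t) s0 = j0)) as [[s0 [Hs0 Hj0]]|Hno].
  - set (a0 := nth k0 s0 0%nat). set (c := (a0 + N * k0)%nat). set (c' := (N * t + m)%nat).
    destruct (St_mem _ _ _ _ _ Hs0) as [Hl0 Ha0']. assert (Ha0 : (a0 < N)%nat) by (apply Ha0'; auto).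
    assert (Hcc : (c < c')%nat).
    { unfold c, c'. assert (N * S k0 <= N * t)%nat by (apply Nat.mul_le_mono_l; lia).
      rewrite Nat.mul_succ_r in H. lia. }
    assert (Hc'D : (c' < D)%nat) by (unfold c', D; lia).
    destruct (Ed_tr c c' D K _ Hcc Hc'D L0) as [L0' E0].
    destruct (Ed_tr c c' D K _ Hcc Hc'D L1) as [L1' E1].
    assert (PW : forall w, 1 * Fm N pi P beta t (S m) w + 1 * Fm N pi P beta t (S m) (fun n => w (tr c c' n)) <=
       1 * Fm N pi P beta t m w + 1 * Fm N pi P beta t m (fun n => w (tr c c' n))).
    { intros w. rewrite !Rmult_1_l. apply (pointwise N pi P beta t m j0 k0 s0 w); auto. }
    pose proof (Ed_mono D _ _ _ _ (LipD_lin _ _ _ _ _ 1 1 L1 L1') (LipD_lin _ _ _ _ _ 1 1 L0 L0') PW) as H.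
    pose proof (Ed_lin D _ _ _ _ 1 1 L1 L1') as EL1. pose proof (Ed_lin D _ _ _ _ 1 1 L0 L0') as EL0.
    cbv beta in H, EL1, EL0. rewrite EL1, EL0 in H.
    rewrite E0, E1 in H. lra.
  - assert (E : Ed D (Fm N pi P beta t (S m)) = Ed D (Fm N pi P beta t m)).
    { apply Ed_ext. intros w. unfold Fm. apply phi_ext_in. intros s Hs.
      destruct (St_mem _ _ _ _ _ Hs) as [Hl Ha].
      apply gsum_ext_pos. intros i Hi. rewrite fm_same; auto. intros E. apply Hno. exists s. split; auto.
      destruct (uniq_divmod t (word_index (St N pi P t) s) i j0 k0); lia. }
    rewrite E. lra.
Qed.

Lemma chain N pi P beta t m : (1 <= t)%nat -> (m <= length (St N pi P t) * t)%nat ->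
  Ed (N * t + length (St N pi P t) * t) (Fm N pi P beta t m) <=
  Ed (N * t + length (St N pi P t) * t) (Fm N pi P beta t 0).
Proof.
  intros Ht. induction m; intros Hm. lra.
  pose proof (step N pi P beta t m Ht ltac:(lia)). pose proof (IHm ltac:(lia)). lra.
Qed.

Lemma Fx_eq N beta t pi P : (fun w => phi N pi P beta t (Xbar N beta w)) =
  (fun w => phi N pi P beta t (fun s => gsum beta (fun k a => (a + N * k)%nat) w 0 s)).
Proof.
  apply functional_extensionality. intros w. f_equal. apply functional_extensionality. intros s.
  unfold Xbar. apply xsum_gsum.
Qed.

Lemma Fz_eq N beta t pi P : (fun w => phi N pi P beta t (Zbar N pi P beta t w)) =
  (fun w => phi N pi P beta t (fun s => gsum beta (fun k a => (word_index (St N pi P t) s * t + k)%nat) w 0 s)).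
Proof.
  apply functional_extensionality. intros w. f_equal. apply functional_extensionality. intros s.
  unfold Zbar. apply zsum_gsum.
Qed.

Lemma Fx_lip N pi P beta t : (1 <= t)%nat ->
  LipD (N * t) (Kc beta (St N pi P t) t) (fun w => phi N pi P beta t (Xbar N beta w)).
Proof.
  intros Ht. rewrite Fx_eq. apply LipD_model; auto. intros s Hs i Hi.
  destruct (St_mem _ _ _ _ _ Hs) as [Hl Ha]. rewrite Hl in Hi. pose proof (Ha i Hi).
  assert (N * S i <= N * t)%nat by (apply Nat.mul_le_mono_l; lia). rewrite Nat.mul_succ_r in H0. lia.
Qed.

Lemma Fz_lip N pi P beta t : (1 <= t)%nat ->
  LipD (length (St N pi P t) * t) (Kc beta (St N pi P t) t) (fun w => phi N pi P beta t (Zbar N pi P beta t w)).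
Proof.
  intros Ht. rewrite Fz_eq. apply LipD_model; auto. intros s Hs i Hi.
  destruct (St_mem _ _ _ _ _ Hs) as [Hl Ha]. rewrite Hl in Hi.
  destruct (word_index_prop _ _ Hs) as [Hj _].
  assert (S (word_index (St N pi P t) s) * t <= length (St N pi P t) * t)%nat by (apply Nat.mul_le_mono_r; lia).
  simpl in H. lia.
Qed.

Lemma F0_eq N pi P beta t : (1 <= t)%nat ->
  forall w, Fm N pi P beta t 0 w = phi N pi P beta t (Xbar N beta w).
Proof.
  intros Ht w. rewrite (equal_f (Fx_eq N beta t pi P) w). unfold Fm. apply phi_ext_in. intros s Hs.
  apply gsum_ext_pos. intros i Hi. unfold fm. destruct (Nat.ltb_spec (word_index (St N pi P t) s * t + (0 + i)) 0). lia.
  auto.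
Qed.

Lemma FL_eq N pi P beta t : (1 <= t)%nat ->
  forall w, Fm N pi P beta t (length (St N pi P t) * t) w =
            phi N pi P beta t (Zbar N pi P beta t (shiftn (N * t) w)).
Proof.
  intros Ht w. rewrite (equal_f (Fz_eq N beta t pi P) (shiftn (N * t) w)). unfold Fm. apply phi_ext_in. intros s Hs.
  destruct (St_mem _ _ _ _ _ Hs) as [Hl Ha].
  destruct (word_index_prop _ _ Hs) as [Hj _].
  apply gsum_ext_pos. intros i Hi. unfold fm, shiftn.
  assert (S (word_index (St N pi P t) s) * t <= length (St N pi P t) * t)%nat by (apply Nat.mul_le_mono_r; lia).
  simpl in H.
  destruct (Nat.ltb_spec (word_index (St N pi P t) s * t + (0 + i)) (length (St N pi P t) * t)). auto. lia.
Qed.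

Theorem lemma4 (N : nat) (P : nat -> nat -> R) (pi beta : nat -> R) (t : nat) :
  row_stochastic N P -> irreducible N P -> aperiodic N P ->
  stationary_pos N P pi ->
  (1 <= t)%nat ->
  (exists vX, gauss_exp (N * t) (fun w => phi N pi P beta t (Xbar N beta w)) vX) /\
  (exists vZ, gauss_exp (length (St N pi P t) * t)
                (fun w => phi N pi P beta t (Zbar N pi P beta t w)) vZ) /\
  (forall vX vZ,
     gauss_exp (N * t) (fun w => phi N pi P beta t (Xbar N beta w)) vX ->
     gauss_exp (length (St N pi P t) * t)
       (fun w => phi N pi P beta t (Zbar N pi P beta t w)) vZ ->
     vZ <= vX).
Proof.
  intros _ _ _ _ Ht.
  pose proof (Fx_lip N pi P beta t Ht) as LX. pose proof (Fz_lip N pi P beta t Ht) as LZ.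
  split; [|split].
  - eexists. apply (Ed_gauss _ _ _ LX).
  - eexists. apply (Ed_gauss _ _ _ LZ).
  - intros vX vZ HX HZ.
    rewrite (Ed_gauss_unique _ _ _ _ LX HX), (Ed_gauss_unique _ _ _ _ LZ HZ).
    rewrite <- (Ed_pad _ (length (St N pi P t) * t) _ _ LX).
    rewrite <- (Ed_dropn (N * t) _ _ _ LZ).
    rewrite (Ed_ext _ (fun w => phi N pi P beta t (Xbar N beta w)) (Fm N pi P beta t 0)) by (intros w; symmetry; apply F0_eq; auto).
    rewrite (Ed_ext _ (fun w => phi N pi P beta t (Zbar N pi P beta t (shiftn (N * t) w))) (Fm N pi P beta t (length (St N pi P t) * t))) by (intros w; symmetry; apply FL_eq; auto).
    apply chain; auto.
Qed.
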